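(* If $f\in\mathcal{G}=\mathcal{G}(1)$, then $\frac12\le \det T_{3,1}(f)\le 1$, and both bounds are sharp.
   Context: $\mathbb{D}=\{z\in\mathbb{C}:|z|<1\}$. $\mathcal{A}$ is the class of analytic functions $f$ on $\mathbb{D}$ with $f(0)=0$, $f'(0)=1$, written $f(z)=z+a_2z^2+a_3z^3+\cdots$. For $0<\delta\le1$, $\mathcal{G}(\delta)=\{f\in\mathcal{A}: \mathrm{Re}[1+zf''(z)/f'(z)]<1+\delta/2 \text{ for all } z\in\mathbb{D}\}$; here $\delta=1$. For $f\in\mathcal{A}$, $\det T_{3,1}(f)=2\,\mathrm{Re}(a_2^2\overline{a_3})-2|a_2|^2-|a_3|^2+1$ is the determinant of the Hermitian Toeplitz matrix $\begin{pmatrix}1&a_2&a_3\\ \overline{a_2}&1&a_2\\ \overline{a_3}&\overline{a_2}&1\end{pmatrix}$. *)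

(* Defs.v *)
From Stdlib Require Import Reals Lra.
Open Scope R_scope.

Definition Cx := (R * R)%type.
Definition Re (z : Cx) : R := fst z.
Definition Im (z : Cx) : R := snd z.
Definition C0 : Cx := (0, 0).
Definition C1 : Cx := (1, 0).
Definition RtoC (r : R) : Cx := (r, 0).
Definition Cadd (z w : Cx) : Cx := (Re z + Re w, Im z + Im w).
Definition Cmul (z w : Cx) : Cx :=
  (Re z * Re w - Im z * Im w, Re z * Im w + Im z * Re w).
Definition Cconj (z : Cx) : Cx := (Re z, - Im z).
Definition Cnorm2 (z : Cx) : R := Re z * Re z + Im z * Im z.
Definition Cscal (r : R) (z : Cx) : Cx := (r * Re z, r * Im z).
Definition Cdiv (z w : Cx) : Cx := Cscal (/ Cnorm2 w) (Cmul z (Cconj w)).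
Fixpoint Cpow (z : Cx) (n : nat) : Cx :=
  match n with O => C1 | S m => Cmul z (Cpow z m) end.

Definition in_D (z : Cx) : Prop := Cnorm2 z < 1.

Definition Csum (u : nat -> Cx) (s : Cx) : Prop :=
  Un_cv (fun N => sum_f_R0 (fun n => Re (u n)) N) (Re s) /\
  Un_cv (fun N => sum_f_R0 (fun n => Im (u n)) N) (Im s).

(** An analytic function f on D is represented by its Taylor coefficients
    a : nat -> Cx at 0, f(z) = sum a_n z^n, the series converging on all of D. *)
Definition analytic_on_D (a : nat -> Cx) : Prop :=
  forall z, in_D z -> exists s, Csum (fun n => Cmul (a n) (Cpow z n)) s.

Definition class_A (a : nat -> Cx) : Prop :=
  analytic_on_D a /\ a O = C0 /\ a 1%nat = C1.

Definition f1_terms (a : nat -> Cx) (z : Cx) (n : nat) : Cx :=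
  Cmul (Cscal (INR (n + 1)) (a (n + 1)%nat)) (Cpow z n).
Definition f2_terms (a : nat -> Cx) (z : Cx) (n : nat) : Cx :=
  Cmul (Cscal (INR ((n + 2) * (n + 1))) (a (n + 2)%nat)) (Cpow z n).

(** Class G(delta): Re[1 + z f''(z)/f'(z)] < 1 + delta/2 on D
    (with f'(z) <> 0 so that the quotient is defined). *)
Definition class_G (delta : R) (a : nat -> Cx) : Prop :=
  class_A a /\
  forall z d1 d2, in_D z -> Csum (f1_terms a z) d1 -> Csum (f2_terms a z) d2 ->
    d1 <> C0 /\ Re (Cadd C1 (Cdiv (Cmul z d2) d1)) < 1 + delta / 2.

Definition detT31 (a : nat -> Cx) : R :=
  2 * Re (Cmul (Cmul (a 2%nat) (a 2%nat)) (Cconj (a 3%nat)))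
  - 2 * Cnorm2 (a 2%nat) - Cnorm2 (a 3%nat) + 1.

(* Main.v *)
Require Import Defs.
From Stdlib Require Import Reals Lra Psatz Arith.
From Coquelicot Require Import Coquelicot.
Require Import Defs.
Open Scope R_scope.

Definition Csub (z w : Cx) : Cx := (Re z - Re w, Im z - Im w).
Definition Cinv (z : Cx) : Cx := (Re z / Cnorm2 z, - Im z / Cnorm2 z).
Definition Cabs (z : Cx) : R := sqrt (Cnorm2 z).
Definition CI : Cx := (0, 1).

Ltac cunfold := unfold Cdiv, Cinv in *; unfold Cadd, Cmul, Cconj, Cnorm2, Cscal, Cdiv, RtoC, C0, C1, Csub, Cinv, CI in *; unfold Re, Im in *; simpl in *.
Ltac cdestr := repeat match goal with z : Cx |- _ => destruct z end.
Ltac cgen := repeat match goal with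
  | |- context [Cpow ?z ?n] => generalize (Cpow z n); intro
  | |- context [?b ?n] => lazymatch type of b with nat -> Cx => generalize (b n); intro end
  end.
Ltac ceq := cbv beta; cgen; cdestr; cunfold; f_equal; ring.

Lemma test (z w : Cx) : Cmul z w = Cmul w z.
Proof. ceq. Qed.

Lemma Cnorm2_ge0 z : 0 <= Cnorm2 z.
Proof. cdestr; cunfold; nra. Qed.

Lemma Cnorm2_mul z w : Cnorm2 (Cmul z w) = Cnorm2 z * Cnorm2 w.
Proof. cdestr; cunfold; ring. Qed.

Lemma Cabs_ge0 z : 0 <= Cabs z.
Proof. apply sqrt_pos. Qed.

Lemma Cabs_sq z : Cabs z * Cabs z = Cnorm2 z.
Proof. apply sqrt_sqrt, Cnorm2_ge0. Qed.

Lemma Cabs_mul z w : Cabs (Cmul z w) = Cabs z * Cabs w.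
Proof. unfold Cabs; rewrite Cnorm2_mul; apply sqrt_mult; apply Cnorm2_ge0. Qed.

Lemma le_sqrt_of_sq a b : 0 <= b -> a * a <= b * b -> sqrt (a*a) <= b.
Proof. intros Hb H. rewrite <- (sqrt_square b) by exact Hb. apply sqrt_le_1_alt. exact H. Qed.

Lemma Cabs_le_of_sq z b : 0 <= b -> Cnorm2 z <= b * b -> Cabs z <= b.
Proof. intros Hb H. unfold Cabs. rewrite <- (sqrt_square b) by exact Hb. apply sqrt_le_1_alt. exact H. Qed.

Lemma Cabs_add z w : Cabs (Cadd z w) <= Cabs z + Cabs w.
Proof.
  apply Cabs_le_of_sq. generalize (Cabs_ge0 z) (Cabs_ge0 w); lra.
  pose proof (Cabs_sq z) as Hz. pose proof (Cabs_sq w) as Hw.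
  pose proof (Cabs_ge0 z) as Hz0. pose proof (Cabs_ge0 w) as Hw0.
  set (A := Cabs z) in *. set (B := Cabs w) in *. clearbody A B.
  cdestr; cunfold.
  assert (HAB : r1 * r + r2 * r0 <= A * B).
  { assert (0 <= A*B) by nra.
    assert (E : (A*B)*(A*B) = (A*A)*(B*B)) by ring.
    rewrite Hz, Hw in E.
    assert (HX : (r1*r+r2*r0)*(r1*r+r2*r0) <= (A*B)*(A*B)).
    { rewrite E. pose proof (Rle_0_sqr (r1*r0 - r2*r)). unfold Rsqr in *. nra. }
    destruct (Rle_dec (r1*r+r2*r0) 0); [lra|].
    nra. }
  nra.
Qed.

Lemma Re_le_Cabs z : Rabs (Re z) <= Cabs z.
Proof.
  unfold Cabs. rewrite <- sqrt_Rsqr_abs. apply sqrt_le_1_alt.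
  unfold Rsqr. cdestr; cunfold. nra.
Qed.

Lemma Im_le_Cabs z : Rabs (Im z) <= Cabs z.
Proof.
  unfold Cabs. rewrite <- sqrt_Rsqr_abs. apply sqrt_le_1_alt.
  unfold Rsqr. cdestr; cunfold. nra.
Qed.

Lemma Cabs_le_ReIm z : Cabs z <= Rabs (Re z) + Rabs (Im z).
Proof.
  apply Cabs_le_of_sq. pose proof (Rabs_pos (Re z)); pose proof (Rabs_pos (Im z)); lra.
  pose proof (Rabs_pos (Re z)); pose proof (Rabs_pos (Im z)).
  assert (Cnorm2 z = Rabs (Re z) * Rabs (Re z) + Rabs (Im z) * Rabs (Im z)).
  { rewrite <- !Rabs_mult. unfold Cnorm2. rewrite !Rabs_right; try nra. }
  nra.
Qed.

Lemma Cpow_S z n : Cpow z (S n) = Cmul z (Cpow z n).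
Proof. reflexivity. Qed.

Lemma Cabs_pow z n : Cabs (Cpow z n) = Cabs z ^ n.
Proof.
  induction n; simpl.
  - unfold Cabs, C1; cunfold. replace (1*1+0*0) with 1 by ring. apply sqrt_1.
  - rewrite Cabs_mul, IHn. reflexivity.
Qed.

Lemma Cabs_scal r z : Cabs (Cscal r z) = Rabs r * Cabs z.
Proof.
  unfold Cabs. rewrite <- sqrt_Rsqr_abs, <- sqrt_mult by (try apply Rle_0_sqr; apply Cnorm2_ge0).
  f_equal. unfold Rsqr. cdestr; cunfold. ring.
Qed.

Lemma Cabs_sub_sym z w : Cabs (Csub z w) = Cabs (Csub w z).
Proof. unfold Cabs. f_equal. cdestr; cunfold. ring. Qed.

Lemma Cabs_sub_tri z w u : Cabs (Csub z u) <= Cabs (Csub z w) + Cabs (Csub w u).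
Proof.
  replace (Csub z u) with (Cadd (Csub z w) (Csub w u)) by ceq. apply Cabs_add.
Qed.

Lemma Cabs_sub_le z w : Cabs (Csub z w) <= Cabs z + Cabs w.
Proof.
  replace (Csub z w) with (Cadd z (Cscal (-1) w)) by ceq.
  eapply Rle_trans. apply Cabs_add. rewrite Cabs_scal. replace (Rabs (-1)) with 1 by (rewrite Rabs_left; lra). lra.
Qed.

Lemma Cabs_ge_sub z w : Cabs z - Cabs w <= Cabs (Csub z w).
Proof.
  pose proof (Cabs_sub_tri z w C0).
  replace (Csub z C0) with z in H by ceq. replace (Csub w C0) with w in H by ceq. lra.
Qed.

Lemma Cabs0 : Cabs C0 = 0.
Proof. unfold Cabs; cunfold. replace (0*0+0*0) with 0 by ring. apply sqrt_0. Qed.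

Lemma Cabs_eq0 z : Cabs z = 0 -> z = C0.
Proof.
  intro H. pose proof (Cabs_sq z). rewrite H in H0.
  cdestr; cunfold. f_equal; nra.
Qed.

Lemma Cnorm2_pos z : z <> C0 -> 0 < Cnorm2 z.
Proof.
  intro H. destruct (Rle_lt_dec (Cnorm2 z) 0); auto.
  exfalso. apply H. cdestr; cunfold. f_equal; nra.
Qed.

Lemma Cabs_lt1 z : in_D z <-> Cabs z < 1.
Proof.
  unfold in_D, Cabs. split; intro H.
  - rewrite <- sqrt_1. apply sqrt_lt_1_alt. split; auto using Cnorm2_ge0.
  - pose proof (Cabs_sq z). unfold Cabs in H0. pose proof (sqrt_pos (Cnorm2 z)). nra.
Qed.

Lemma pow_le1 x n : 0 <= x <= 1 -> x ^ n <= 1.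
Proof.
  intro H. induction n; simpl. lra.
  assert (0 <= x ^ n) by (apply pow_le; lra). nra.
Qed.

Ltac cfield := cbv beta; cgen; cdestr; cunfold; f_equal; field.

Ltac cgen2 := repeat match goal with
  | |- context [Cpow ?z ?n] => generalize (Cpow z n); intro
  | |- context [Cinv ?z] => generalize (Cinv z); intro
  | |- context [?b ?n] => lazymatch type of b with nat -> Cx => generalize (b n); intro end
  end.

Lemma term_le_sum (f : nat -> R) N n : (forall k, 0 <= f k) -> (n <= N)%nat -> f n <= sum_f_R0 f N.
Proof.
  intros Hf. induction N; intros Hn.
  - inversion Hn. simpl. lra.
  - inversion Hn. + simpl. subst. pose proof (cond_pos_sum f N). 
      assert (0 <= sum_f_R0 f N). { clear -Hf. induction N; simpl; auto. specialize (Hf (S N)). lra. }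
      lra.
    + simpl. specialize (IHN H0). specialize (Hf (S N)). lra.
Qed.

Lemma bounded_of_cv0 (u : nat -> R) : Un_cv u 0 -> exists M, forall n, Rabs (u n) <= M.
Proof.
  intro H. destruct (H 1 Rlt_0_1) as [N HN].
  exists (1 + sum_f_R0 (fun k => Rabs (u k)) N). intro n.
  assert (0 <= sum_f_R0 (fun k => Rabs (u k)) N).
  { clear. induction N; simpl; [apply Rabs_pos|]. pose proof (Rabs_pos (u (S N))). lra. }
  destruct (le_lt_dec n N).
  - pose proof (term_le_sum (fun k => Rabs (u k)) N n (fun k => Rabs_pos _) l). simpl in H1. lra.
  - specialize (HN n ltac:(lia)). unfold R_dist in HN. rewrite Rminus_0_r in HN. lra.
Qed.

Lemma bern q : 0 <= q < 1 -> exists C, forall n, INR (S n) * q ^ n <= C.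
Proof.
  intros Hq. destruct (Req_dec q 0) as [Hq0|Hq0].
  - exists 1. intros [|n]; simpl. lra. subst. rewrite Rmult_0_l, Rmult_0_r. lra.
  - set (d := / q - 1).
    assert (Hd : q * (1 + d) = 1) by (unfold d; field; auto).
    assert (Hdp : 0 < d). { unfold d. assert (1 < / q). { rewrite <- Rinv_1. apply Rinv_lt_contravar; lra. } lra. }
    assert (Hb : forall n, q ^ n * (1 + INR n * d) <= 1).
    { induction n. simpl. lra.
      rewrite S_INR. simpl.
      assert (0 <= q ^ n) by (apply pow_le; lra).
      assert (q ^ n <= 1) by (apply pow_le1; lra).
      nra. }
    exists (1 + / d). intro n. specialize (Hb n). rewrite S_INR.
    assert (0 <= q ^ n) by (apply pow_le; lra).
    assert (Hpos: 0 < 1 + INR n * d) by (pose proof (pos_INR n); nra).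
    assert (q ^ n <= / (1 + INR n * d)).
    { apply (Rmult_le_reg_r (1 + INR n * d)); auto. rewrite Rinv_l by lra. lra. }
    apply Rle_trans with ((INR n + 1) * / (1 + INR n * d)).
    { apply Rmult_le_compat_l; auto. pose proof (pos_INR n); lra. }
    apply (Rmult_le_reg_r (1 + INR n * d)); auto.
    rewrite Rmult_assoc, Rinv_l by lra.
    assert (0 < /d) by (apply Rinv_0_lt_compat; lra).
    assert ((1 + /d) * (1 + INR n * d) = 1 + INR n * d + /d + INR n) by (field; lra).
    rewrite H2. pose proof (pos_INR n). nra.
Qed.

Definition good (b : nat -> Cx) := forall r, 0 <= r < 1 -> exists M, forall n, Cabs (b n) * r ^ n <= M.

Lemma good_M_nonneg b r M : (forall n, Cabs (b n) * r ^ n <= M) -> 0 <= M.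
Proof. intro H. specialize (H O). simpl in H. pose proof (Cabs_ge0 (b O)). lra. Qed.

Lemma good_ext b c : (forall n, b n = c n) -> good b -> good c.
Proof. intros E H r Hr. destruct (H r Hr) as [M HM]. exists M. intro n. rewrite <- E. auto. Qed.

Lemma good_mono b r r' M : 0 <= r <= r' -> (forall n, Cabs (b n) * r' ^ n <= M) -> forall n, Cabs (b n) * r ^ n <= M.
Proof.
  intros Hr H n. eapply Rle_trans; [|apply (H n)]. apply Rmult_le_compat_l. apply Cabs_ge0.
  apply pow_incr. lra.
Qed.

Lemma good_mid b r : good b -> 0 <= r < 1 -> exists M, 0 <= M /\ forall n, Cabs (b n) * ((1 + r)/2) ^ n <= M.
Proof.
  intros H Hr. destruct (H ((1+r)/2) ltac:(lra)) as [M HM]. exists M. split; auto.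
  eapply good_M_nonneg; eauto.
Qed.

Lemma good_shift b : good b -> good (fun n => b (S n)).
Proof.
  intros H r Hr. destruct (good_mid b r H Hr) as [M [HM0 HM]].
  set (r' := (1+r)/2) in *.
  exists (M / r'). intro n.
  specialize (HM (S n)). simpl in HM.
  assert (0 < r') by (unfold r'; lra).
  assert (r ^ n <= r' ^ n) by (apply pow_incr; unfold r'; lra).
  pose proof (Cabs_ge0 (b (S n))).
  apply (Rmult_le_reg_r r'); auto. replace (M / r' * r') with M by (field; lra).
  assert (0 <= r' ^ n) by (apply pow_le; lra).
  assert (Cabs (b (S n)) * r^n <= Cabs (b (S n)) * r'^n) by (apply Rmult_le_compat_l; lra).
  clearbody r'. nra.
Qed.

Definition shiftR (b : nat -> Cx) (n : nat) : Cx := match n with O => C0 | S m => b m end.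

Lemma good_shiftR b : good b -> good (shiftR b).
Proof.
  intros H r Hr. destruct (H r Hr) as [M HM]. exists M. intros [|n]; simpl.
  - rewrite Cabs0. eapply good_M_nonneg in HM. lra.
  - specialize (HM n). pose proof (Cabs_ge0 (b n)). assert (0 <= r ^ n) by (apply pow_le; lra).
    assert (0 <= Cabs (b n) * r ^ n) by (apply Rmult_le_pos; auto).
    replace (Cabs (b n) * (r * r ^ n)) with ((Cabs (b n) * r ^ n) * r) by ring. nra.
Qed.

Lemma good_plus b c : good b -> good c -> good (fun n => Cadd (b n) (c n)).
Proof.
  intros Hb Hc r Hr. destruct (Hb r Hr) as [M1 H1]. destruct (Hc r Hr) as [M2 H2].
  exists (M1 + M2). intro n. specialize (H1 n). specialize (H2 n).
  pose proof (Cabs_add (b n) (c n)). assert (0 <= r ^ n) by (apply pow_le; lra). nra.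
Qed.

Lemma good_mul b k : good b -> good (fun n => Cmul k (b n)).
Proof.
  intros Hb r Hr. destruct (Hb r Hr) as [M1 H1].
  exists (Cabs k * M1). intro n. rewrite Cabs_mul. rewrite Rmult_assoc.
  apply Rmult_le_compat_l; auto. apply Cabs_ge0.
Qed.

Lemma good_deriv b : good b -> good (fun n => Cscal (INR (S n)) (b (S n))).
Proof.
  intros H r Hr. destruct (good_mid b r H Hr) as [M [HM0 HM]].
  set (r' := (1+r)/2) in *. assert (0 < r') by (unfold r'; lra).
  destruct (bern (r / r')) as [C HC].
  { split. apply Rdiv_le_0_compat; lra. apply Rmult_lt_reg_r with r'; auto. replace (r / r' * r') with r by (field; lra). unfold r'. lra. }
  exists (C * M / r'). intro n.
  rewrite Cabs_scal, Rabs_right by (apply Rle_ge, pos_INR).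
  specialize (HM (S n)). specialize (HC n). simpl in HM.
  assert (E : r ^ n = (r / r') ^ n * r' ^ n). { rewrite <- Rpow_mult_distr. f_equal. field. lra. }
  rewrite E.
  assert (0 <= (r/r')^n) by (apply pow_le; apply Rdiv_le_0_compat; lra).
  assert (0 <= r'^n) by (apply pow_le; lra).
  pose proof (Cabs_ge0 (b (S n))).
  assert (Cabs (b (S n)) * r' ^ n <= M / r').
  { apply (Rmult_le_reg_r r'); auto. replace (M / r' * r') with M by (field; lra). lra. }
  assert (0 <= C) by (pose proof (pos_INR (S n)); nra).
  replace (INR (S n) * Cabs (b (S n)) * ((r / r') ^ n * r' ^ n)) with ((INR (S n) * (r/r')^n) * (Cabs (b (S n)) * r'^n)) by ring.
  replace (C * M / r') with (C * (M / r')) by (unfold Rdiv; ring).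
  apply Rmult_le_compat; auto. apply Rmult_le_pos; auto. apply pos_INR. apply Rmult_le_pos; auto.
Qed.

Lemma good_fin b N : (forall n, (N < n)%nat -> b n = C0) -> good b.
Proof.
  intros H r Hr. exists (sum_f_R0 (fun k => Cabs (b k)) N). intro n.
  assert (0 <= sum_f_R0 (fun k => Cabs (b k)) N).
  { clear. induction N; simpl; [apply Cabs_ge0|]. pose proof (Cabs_ge0 (b (S N))). lra. }
  destruct (le_lt_dec n N).
  - pose proof (term_le_sum (fun k => Cabs (b k)) N n (fun k => Cabs_ge0 _) l). simpl in H1.
    assert (r ^ n <= 1) by (apply pow_le1; lra). assert (0 <= r ^ n) by (apply pow_le; lra).
    pose proof (Cabs_ge0 (b n)). nra.
  - rewrite H by auto. rewrite Cabs0. lra.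
Qed.

Lemma ex_series_le_R (a b : nat -> R) : (forall n, Rabs (a n) <= b n) -> ex_series b -> ex_series a.
Proof. intros H Hb. apply (@ex_series_le R_AbsRing R_CompleteNormedModule a b); auto. Qed.

Definition absconv (u : nat -> Cx) := ex_series (fun n => Cabs (u n)).
Definition CS (u : nat -> Cx) : Cx := (Series (fun n => Re (u n)), Series (fun n => Im (u n))).

Lemma absconv_re u : absconv u -> ex_series (fun n => Re (u n)).
Proof. intro H. eapply ex_series_le_R; [|exact H]. intro n. apply Re_le_Cabs. Qed.
Lemma absconv_im u : absconv u -> ex_series (fun n => Im (u n)).
Proof. intro H. eapply ex_series_le_R; [|exact H]. intro n. apply Im_le_Cabs. Qed.
Lemma absconv_re_abs u : absconv u -> ex_series (fun n => Rabs (Re (u n))).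
Proof. intro H. eapply ex_series_le_R; [|exact H]. intro n. rewrite Rabs_Rabsolu. apply Re_le_Cabs. Qed.
Lemma absconv_im_abs u : absconv u -> ex_series (fun n => Rabs (Im (u n))).
Proof. intro H. eapply ex_series_le_R; [|exact H]. intro n. rewrite Rabs_Rabsolu. apply Im_le_Cabs. Qed.

Lemma absconv_le u (v : nat -> R) : (forall n, Cabs (u n) <= v n) -> ex_series v -> absconv u.
Proof. intros H Hv. eapply ex_series_le_R; [|exact Hv]. intro n. rewrite Rabs_right. auto. apply Rle_ge, Cabs_ge0. Qed.

Lemma absconv_plus u v : absconv u -> absconv v -> absconv (fun n => Cadd (u n) (v n)).
Proof. intros Hu Hv. apply absconv_le with (fun n => Cabs (u n) + Cabs (v n)). intro; apply Cabs_add.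
  apply (ex_series_plus _ _ Hu Hv). Qed.

Lemma absconv_mul k u : absconv u -> absconv (fun n => Cmul k (u n)).
Proof. intros Hu. apply absconv_le with (fun n => Cabs k * Cabs (u n)). intro; rewrite Cabs_mul; lra.
  apply (ex_series_scal_l _ _ Hu). Qed.

Lemma absconv_ext u v : (forall n, u n = v n) -> absconv u -> absconv v.
Proof. intros E H. eapply ex_series_ext; [|exact H]. intro n; simpl. rewrite E. auto. Qed.

Lemma CS_ext u v : (forall n, u n = v n) -> CS u = CS v.
Proof. intro E. unfold CS. f_equal; apply Series_ext; intro n; rewrite E; auto. Qed.

Lemma CS_plus u v : absconv u -> absconv v -> CS (fun n => Cadd (u n) (v n)) = Cadd (CS u) (CS v).
Proof.
  intros Hu Hv. unfold CS, Cadd. simpl. f_equal.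
  - rewrite <- Series_plus by (apply absconv_re; auto). apply Series_ext. intro n. reflexivity.
  - rewrite <- Series_plus by (apply absconv_im; auto). apply Series_ext. intro n. reflexivity.
Qed.

Lemma CS_mul k u : absconv u -> CS (fun n => Cmul k (u n)) = Cmul k (CS u).
Proof.
  intros Hu. pose proof (absconv_re _ Hu) as H1. pose proof (absconv_im _ Hu) as H2.
  unfold CS, Cmul, Re, Im in *. simpl. f_equal.
  - rewrite <- !Series_scal_l, <- Series_minus.
    apply Series_ext. intro n. reflexivity.
    apply (ex_series_scal_l _ _ H1). apply (ex_series_scal_l _ _ H2).
  - rewrite <- !Series_scal_l, <- Series_plus.
    apply Series_ext. intro n. reflexivity.
    apply (ex_series_scal_l _ _ H2). apply (ex_series_scal_l _ _ H1).
Qed.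

Lemma CS_shift u : absconv u -> CS u = Cadd (u O) (CS (fun n => u (S n))).
Proof.
  intros Hu. unfold CS, Cadd. simpl. f_equal.
  - apply Series_incr_1. apply absconv_re; auto.
  - apply Series_incr_1. apply absconv_im; auto.
Qed.

Lemma absconv_shift u : absconv u -> absconv (fun n => u (S n)).
Proof. intro H. unfold absconv. apply ex_series_incr_1 in H. exact H. Qed.

Lemma CS_bound u : absconv u -> Cabs (CS u) <= 2 * Series (fun n => Cabs (u n)).
Proof.
  intro Hu. eapply Rle_trans. apply Cabs_le_ReIm. unfold CS; simpl. unfold Re at 1, Im at 1. simpl.
  eapply Rle_trans. apply Rplus_le_compat; apply Series_Rabs.
  apply absconv_re_abs; auto. apply absconv_im_abs; auto.
  assert (Series (fun n => Rabs (Re (u n))) <= Series (fun n => Cabs (u n))).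
  { apply Series_le; auto. intro n; split. apply Rabs_pos. apply Re_le_Cabs. }
  assert (Series (fun n => Rabs (Im (u n))) <= Series (fun n => Cabs (u n))).
  { apply Series_le; auto. intro n; split. apply Rabs_pos. apply Im_le_Cabs. }
  unfold Re, Im in *. simpl in *. lra.
Qed.

Lemma CS_bound_le u (v : nat -> R) : absconv u -> (forall n, Cabs (u n) <= v n) -> ex_series v -> Cabs (CS u) <= 2 * Series v.
Proof.
  intros Hu H Hv. eapply Rle_trans. apply CS_bound; auto.
  assert (Series (fun n => Cabs (u n)) <= Series v).
  { apply Series_le; auto. intro n; split. apply Cabs_ge0. auto. }
  lra.
Qed.

Lemma CS_Csum u : absconv u -> Csum u (CS u).
Proof.
  intro Hu. split.
  - pose proof (Series_correct _ (absconv_re u Hu)) as H. apply is_series_Reals in H. exact H.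
  - pose proof (Series_correct _ (absconv_im u Hu)) as H. apply is_series_Reals in H. exact H.
Qed.

Lemma Csum_unique u s s' : Csum u s -> Csum u s' -> s = s'.
Proof.
  intros [H1 H2] [H3 H4]. destruct s, s'. unfold Re, Im in *; simpl in *.
  f_equal; eapply UL_sequence; eauto.
Qed.

Definition term (b : nat -> Cx) (z : Cx) (n : nat) : Cx := Cmul (b n) (Cpow z n).
Definition PS b z := CS (term b z).

Lemma geom_ex q : 0 <= q < 1 -> ex_series (fun n => q ^ n).
Proof. intro. apply ex_series_geom. rewrite Rabs_right; lra. Qed.

Lemma good_absconv b z : good b -> Cabs z < 1 -> absconv (term b z).
Proof.
  intros H Hz. pose proof (Cabs_ge0 z).
  destruct (good_mid b (Cabs z) H ltac:(lra)) as [M [HM0 HM]].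
  set (r := (1 + Cabs z)/2) in *. assert (0 < r) by (unfold r; lra).
  apply absconv_le with (fun n => M * (Cabs z / r) ^ n).
  - intro n. unfold term. rewrite Cabs_mul, Cabs_pow.
    replace (Cabs z ^ n) with ((Cabs z / r) ^ n * r ^ n) by (rewrite <- Rpow_mult_distr; f_equal; field; lra).
    specialize (HM n). assert (0 <= (Cabs z / r)^n) by (apply pow_le, Rdiv_le_0_compat; lra).
    replace (Cabs (b n) * ((Cabs z / r) ^ n * r ^ n)) with ((Cabs (b n) * r ^ n) * (Cabs z / r) ^ n) by ring.
    apply Rmult_le_compat_r; auto.
  - apply (ex_series_scal_l M (fun n => (Cabs z / r) ^ n)). apply geom_ex.
    split. apply Rdiv_le_0_compat; lra. apply Rmult_lt_reg_r with r; auto.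
    replace (Cabs z / r * r) with (Cabs z) by (field; lra). unfold r. lra.
Qed.

Lemma PS_Csum b z : good b -> in_D z -> Csum (fun n => Cmul (b n) (Cpow z n)) (PS b z).
Proof. intros H Hz. apply CS_Csum. apply good_absconv; auto. apply Cabs_lt1; auto. Qed.

Lemma PS_ext b c z : (forall n, b n = c n) -> PS b z = PS c z.
Proof. intro E. unfold PS. apply CS_ext. intro n. unfold term. rewrite E; auto. Qed.

Lemma PS_plus b c z : good b -> good c -> Cabs z < 1 -> PS (fun n => Cadd (b n) (c n)) z = Cadd (PS b z) (PS c z).
Proof.
  intros Hb Hc Hz. unfold PS. rewrite <- CS_plus by (apply good_absconv; auto).
  apply CS_ext. intro n. unfold term. ceq.
Qed.

Lemma PS_mul k b z : good b -> Cabs z < 1 -> PS (fun n => Cmul k (b n)) z = Cmul k (PS b z).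
Proof.
  intros Hb Hz. unfold PS. rewrite <- CS_mul by (apply good_absconv; auto).
  apply CS_ext. intro n. unfold term. ceq.
Qed.

Lemma PS_shift b z : good b -> Cabs z < 1 -> PS b z = Cadd (b O) (Cmul z (PS (fun n => b (S n)) z)).
Proof.
  intros Hb Hz. unfold PS. rewrite CS_shift by (apply good_absconv; auto).
  rewrite <- CS_mul by (apply good_absconv; auto; apply good_shift; auto).
  f_equal. unfold term. simpl. ceq.
  apply CS_ext. intro n. unfold term. simpl. ceq.
Qed.

Lemma PS_shiftR b z : good b -> Cabs z < 1 -> PS (shiftR b) z = Cmul z (PS b z).
Proof.
  intros Hb Hz. rewrite PS_shift by (auto; apply good_shiftR; auto). simpl.
  rewrite (PS_ext (fun n => shiftR b (S n)) b) by reflexivity. ceq.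
Qed.

Lemma CS_sub u v : absconv u -> absconv v -> CS (fun n => Csub (u n) (v n)) = Csub (CS u) (CS v).
Proof.
  intros Hu Hv. unfold CS, Csub. simpl. f_equal.
  - rewrite <- Series_minus by (apply absconv_re; auto). apply Series_ext. intro n. reflexivity.
  - rewrite <- Series_minus by (apply absconv_im; auto). apply Series_ext. intro n. reflexivity.
Qed.

Lemma absconv_sub u v : absconv u -> absconv v -> absconv (fun n => Csub (u n) (v n)).
Proof. intros Hu Hv. apply absconv_le with (fun n => Cabs (u n) + Cabs (v n)). intro; apply Cabs_sub_le.
  apply (ex_series_plus _ _ Hu Hv). Qed.

Definition deriv (b : nat -> Cx) (n : nat) : Cx := Cscal (INR (S n)) (b (S n)).

Lemma good_exR c R : good c -> 0 <= R < 1 -> ex_series (fun n => Cabs (c n) * R ^ n).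
Proof.
  intros Hc HR. pose proof (good_absconv c (R,0) Hc) as H.
  assert (E : Cabs (R,0) = R).
  { unfold Cabs, Cnorm2, Re, Im; simpl. replace (R*R+0*0) with (R*R) by ring. apply sqrt_square. lra. }
  rewrite E in H. specialize (H ltac:(lra)). unfold absconv in H.
  eapply ex_series_ext; [|exact H]. intro n. unfold term. simpl. rewrite Cabs_mul, Cabs_pow, E. reflexivity.
Qed.

Lemma absconv_unshift u : absconv (fun n => u (S n)) -> absconv u.
Proof. intro H. unfold absconv. apply ex_series_incr_1. exact H. Qed.

Lemma PS_bound c z R : good c -> 0 <= R < 1 -> Cabs z <= R -> Cabs (PS c z) <= 2 * Series (fun n => Cabs (c n) * R ^ n).
Proof.
  intros Hc HR Hz. unfold PS. apply CS_bound_le.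
  apply good_absconv; auto; lra.
  intro n. unfold term. rewrite Cabs_mul, Cabs_pow. apply Rmult_le_compat_l. apply Cabs_ge0.
  apply pow_incr. split; auto. apply Cabs_ge0.
  apply good_exR; auto.
Qed.

Lemma good_sq b R : good b -> 0 <= R < 1 -> ex_series (fun n => INR n * INR n * Cabs (b n) * R ^ n).
Proof.
  intros Hb HR. destruct (good_mid b R Hb HR) as [M [HM0 HM]].
  set (R' := (1+R)/2) in *. assert (0 < R') by (unfold R'; lra).
  set (t := R / R'). assert (Ht : 0 <= t < 1).
  { unfold t. split. apply Rdiv_le_0_compat; lra. apply Rmult_lt_reg_r with R'; auto.
    replace (R / R' * R') with R by (field; lra). unfold R'. lra. }
  set (t1 := (1+t)/2). set (t2 := t / t1).
  assert (Ht1 : 0 < t1 < 1) by (unfold t1; lra).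
  assert (Ht2 : 0 <= t2 < 1).
  { unfold t2. split. apply Rdiv_le_0_compat; lra. apply Rmult_lt_reg_r with t1; try lra.
    replace (t / t1 * t1) with t by (field; lra). unfold t1. lra. }
  set (t3 := (1+t2)/2). set (t4 := t2 / t3).
  assert (Ht3' : 0 < t3) by (unfold t3; lra).
  assert (Ht3 : 0 <= t3 < 1) by (unfold t3; lra).
  assert (Ht4 : 0 <= t4 < 1).
  { unfold t4. split. apply Rdiv_le_0_compat; lra. apply Rmult_lt_reg_r with t3; try lra.
    replace (t2 / t3 * t3) with t2 by (field; lra). unfold t3. lra. }
  destruct (bern t3 Ht3) as [C3 HC3]. destruct (bern t4 Ht4) as [C4 HC4].
  apply ex_series_le_R with (fun n => (C3 * C4 * M) * t1 ^ n).
  2:{ apply (ex_series_scal_l (C3*C4*M) (fun n => t1 ^ n)). apply geom_ex; lra. }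
  intro n.
  assert (E1 : t3 * t4 = t2) by (unfold t4; field; lra).
  assert (E2 : t2 * t1 = t) by (unfold t2; field; lra).
  assert (E3 : t * R' = R) by (unfold t; field; lra).
  assert (ER : R ^ n = t3 ^ n * t4 ^ n * t1 ^ n * R' ^ n).
  { rewrite <- E3, <- E2, <- E1. rewrite !Rpow_mult_distr. reflexivity. }
  assert (0 <= t3 ^ n) by (apply pow_le; lra). assert (0 <= t4 ^ n) by (apply pow_le; lra).
  assert (0 <= t1 ^ n) by (apply pow_le; lra). assert (0 <= R' ^ n) by (apply pow_le; lra).
  specialize (HC3 n). specialize (HC4 n). specialize (HM n).
  pose proof (pos_INR n). rewrite S_INR in HC3, HC4.
  pose proof (Cabs_ge0 (b n)).
  rewrite ER. rewrite Rabs_right.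
  2:{ apply Rle_ge. repeat apply Rmult_le_pos; auto. }
  assert (A1 : INR n * t3 ^ n <= C3) by nra.
  assert (A2 : INR n * t4 ^ n <= C4) by nra.
  assert (0 <= INR n * t3 ^ n) by nra. assert (0 <= INR n * t4 ^ n) by nra.
  assert (0 <= Cabs (b n) * R' ^ n) by nra.
  replace (INR n * INR n * Cabs (b n) * (t3 ^ n * t4 ^ n * t1 ^ n * R' ^ n))
    with ((INR n * t3 ^ n) * (INR n * t4 ^ n) * (Cabs (b n) * R' ^ n) * t1 ^ n) by ring.
  apply Rmult_le_compat_r; auto.
  apply Rmult_le_compat; auto. nra. apply Rmult_le_compat; auto.
Qed.

Lemma pow_quad w z R n : 0 < R -> Cabs w <= R -> Cabs z <= R ->
  Cabs (Csub (Csub (Cpow w n) (Cpow z n)) (Cmul (Cscal (INR n) (Csub w z)) (Cpow z (pred n))))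
  <= INR n * INR n * R ^ n * (Cabs (Csub w z) ^ 2 / (R * R)).
Proof.
  intros HR Hw Hz. pose proof (Cabs_ge0 (Csub w z)) as Hk.
  set (k := Cabs (Csub w z)) in *.
  induction n as [|[|m] IH].
  - simpl. replace (Csub (Csub C1 C1) (Cmul (Cscal 0 (Csub w z)) C1)) with C0 by ceq.
    rewrite Cabs0. lra.
  - simpl. replace (Csub (Csub (Cmul w C1) (Cmul z C1)) (Cmul (Cscal 1 (Csub w z)) C1)) with C0 by ceq.
    rewrite Cabs0. assert (0 <= k^2/(R*R)) by (apply Rdiv_le_0_compat; nra). nra.
  - set (E := fun n => Csub (Csub (Cpow w n) (Cpow z n)) (Cmul (Cscal (INR n) (Csub w z)) (Cpow z (pred n)))).
    fold (E (S m)) in IH. fold (E (S (S m))).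
    assert (Erec : E (S (S m)) = Cadd (Cmul w (E (S m))) (Cscal (INR (S m)) (Cmul (Cmul (Csub w z) (Csub w z)) (Cpow z m)))).
    { unfold E. simpl pred. rewrite !S_INR. simpl Cpow. ceq. }
    rewrite Erec. eapply Rle_trans. apply Cabs_add.
    rewrite Cabs_mul, Cabs_scal, !Cabs_mul, Cabs_pow. rewrite Rabs_right by (apply Rle_ge, pos_INR).
    fold k.
    assert (0 <= Cabs (E (S m))) by apply Cabs_ge0.
    assert (Hzm : Cabs z ^ m <= R ^ m) by (apply pow_incr; split; auto; apply Cabs_ge0).
    assert (0 <= Cabs z ^ m) by (apply pow_le, Cabs_ge0).
    pose proof (pos_INR m). rewrite !S_INR in *.
    assert (0 <= R ^ m) by (apply pow_le; lra).
    assert (Q : (INR m + 1) * (INR m + 1) * R ^ S m * (k ^ 2 / (R * R)) = (INR m + 1) * (INR m + 1) * R ^ m * (k*k) / R).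
    { simpl. field. lra. }
    assert (Q2 : (INR m + 1 + 1) * (INR m + 1 + 1) * R ^ S (S m) * (k ^ 2 / (R * R)) = (INR m + 1 + 1) * (INR m + 1 + 1) * R ^ m * (k*k)).
    { simpl. field. lra. }
    rewrite Q in IH. rewrite Q2.
    assert (H4 : Cabs w * Cabs (E (S m)) <= R * ((INR m + 1) * (INR m + 1) * R ^ m * (k * k) / R)).
    { apply Rmult_le_compat; auto. apply Cabs_ge0. }
    replace (R * ((INR m + 1) * (INR m + 1) * R ^ m * (k * k) / R)) with ((INR m + 1) * (INR m + 1) * R ^ m * (k * k)) in H4 by (field; lra).
    assert ((INR m + 1) * (k * k * Cabs z ^ m) <= (INR m + 1) * (k*k * R ^ m)).
    { apply Rmult_le_compat_l. lra. apply Rmult_le_compat_l. nra. auto. }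
    assert (0 <= k*k*R^m) by nra.
    nra.
Qed.

Lemma Series_zero : Series (fun _ => 0) = 0.
Proof. rewrite (Series_ext _ (fun n => 0 * 0)) by (intro; ring). rewrite Series_scal_l. ring. Qed.

Lemma PS_quad b R : good b -> 0 < R < 1 -> exists C, 0 <= C /\ forall w z, Cabs w <= R -> Cabs z <= R ->
  Cabs (Csub (Csub (PS b w) (PS b z)) (Cmul (Csub w z) (PS (deriv b) z))) <= C * Cabs (Csub w z) ^ 2.
Proof.
  intros Hb HR.
  pose proof (good_sq b R Hb ltac:(lra)) as Hsq.
  set (S2 := Series (fun n => INR n * INR n * Cabs (b n) * R ^ n)).
  assert (HS2 : 0 <= S2).
  { unfold S2. apply Rle_trans with (Series (fun _ => 0)). rewrite Series_zero; lra.
    apply Series_le; auto. intro n; split; [lra|]. pose proof (pos_INR n). pose proof (Cabs_ge0 (b n)).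
    assert (0 <= R^n) by (apply pow_le; lra). repeat apply Rmult_le_pos; auto. }
  exists (2 * S2 / (R * R)). split. apply Rdiv_le_0_compat; nra.
  intros w z Hw Hz.
  assert (Hw1 : Cabs w < 1) by lra. assert (Hz1 : Cabs z < 1) by lra.
  set (d := fun n => Cmul (b n) (Cmul (Cscal (INR n) (Csub w z)) (Cpow z (pred n)))).
  assert (Hds : forall n, d (S n) = Cmul (Csub w z) (term (deriv b) z n)).
  { intro n. unfold d, term, deriv. simpl pred. ceq. }
  assert (Had : absconv d).
  { apply absconv_unshift. eapply absconv_ext. intro n. symmetry. apply Hds.
    apply absconv_mul. apply good_absconv; auto. apply good_deriv; auto. }
  assert (Ed : Cmul (Csub w z) (PS (deriv b) z) = CS d).
  { rewrite CS_shift by auto. replace (d O) with C0 by (unfold d; simpl; ceq).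
    rewrite (CS_ext (fun n => d (S n)) (fun n => Cmul (Csub w z) (term (deriv b) z n))) by auto.
    rewrite CS_mul. unfold PS. ceq. apply good_absconv; auto. apply good_deriv; auto. }
  rewrite Ed. unfold PS.
  rewrite <- CS_sub by (apply good_absconv; auto).
  rewrite <- CS_sub; auto. 2: apply absconv_sub; apply good_absconv; auto.
  set (k := Cabs (Csub w z)).
  assert (Hk : 0 <= k) by apply Cabs_ge0.
  eapply Rle_trans. apply CS_bound_le with (v := fun n => (k^2/(R*R)) * (INR n * INR n * Cabs (b n) * R ^ n)).
  - apply absconv_sub; auto. apply absconv_sub; apply good_absconv; auto.
  - intro n.
    replace (Csub (Csub (term b w n) (term b z n)) (d n)) with
      (Cmul (b n) (Csub (Csub (Cpow w n) (Cpow z n)) (Cmul (Cscal (INR n) (Csub w z)) (Cpow z (pred n))))).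
    2:{ unfold term, d. ceq. }
    rewrite Cabs_mul. eapply Rle_trans. apply Rmult_le_compat_l. apply Cabs_ge0.
    apply (pow_quad w z R n); auto; lra. fold k. right. field. lra.
  - apply (ex_series_scal_l (k^2/(R*R)) _ Hsq).
  - rewrite Series_scal_l. fold S2. right. field. lra.
Qed.

Lemma isd_eq (f : R -> R) (t a b : R) : is_derive f t a -> a = b -> is_derive f t b.
Proof. intros H E; subst; auto. Qed.

Lemma isd_ext (f g : R -> R) t a : (forall s, f s = g s) -> is_derive f t a -> is_derive g t a.
Proof. intros E H. exact (@is_derive_ext R_AbsRing R_NormedModule f g t a E H). Qed.
Lemma isd_mult (f g : R -> R) t a b : is_derive f t a -> is_derive g t b -> is_derive (fun s => f s * g s) t (a * g t + f t * b).
Proof. intros Ha Hb. exact (is_derive_mult f g t a b Ha Hb Rmult_comm). Qed.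
Lemma isd_plus (f g : R -> R) t a b : is_derive f t a -> is_derive g t b -> is_derive (fun s => f s + g s) t (a + b).
Proof. intros Ha Hb. exact (is_derive_plus f g t a b Ha Hb). Qed.
Lemma isd_minus (f g : R -> R) t a b : is_derive f t a -> is_derive g t b -> is_derive (fun s => f s - g s) t (a - b).
Proof. intros Ha Hb. exact (is_derive_minus f g t a b Ha Hb). Qed.
Lemma isd_opp (f : R -> R) t a : is_derive f t a -> is_derive (fun s => - f s) t (- a).
Proof. intro H. eapply isd_eq. eapply isd_ext; [|apply (is_derive_scal f t (-1) a H)]. intro; simpl; ring. ring. Qed.
Lemma isd_const (c : R) t : is_derive (fun _ => c) t 0.
Proof. exact (is_derive_const c t). Qed.
Lemma isd_id t : is_derive (fun s : R => s) t 1.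
Proof. exact (is_derive_id t). Qed.

Definition CDer (f : R -> Cx) (t : R) (d : Cx) :=
  is_derive (fun s => Re (f s)) t (Re d) /\ is_derive (fun s => Im (f s)) t (Im d).

Lemma CDer_ext f g t d : (forall s, f s = g s) -> CDer f t d -> CDer g t d.
Proof. intros E [H1 H2]. split; eapply isd_ext; try eassumption; intro s; simpl; rewrite E; auto. Qed.

Lemma CDer_val f t d d' : CDer f t d -> d = d' -> CDer f t d'.
Proof. intros H E; subst; auto. Qed.

Lemma CDer_const c t : CDer (fun _ => c) t C0.
Proof. split; apply isd_const. Qed.

Lemma CDer_mul f g t df dg : CDer f t df -> CDer g t dg ->
  CDer (fun s => Cmul (f s) (g s)) t (Cadd (Cmul df (g t)) (Cmul (f t) dg)).
Proof.
  intros [F1 F2] [G1 G2]. split.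
  - eapply isd_eq. apply isd_minus; apply isd_mult; eauto. unfold Cmul, Cadd, Re, Im; simpl. ring.
  - eapply isd_eq. apply isd_plus; apply isd_mult; eauto. unfold Cmul, Cadd, Re, Im; simpl. ring.
Qed.

Lemma CDer_add f g t df dg : CDer f t df -> CDer g t dg ->
  CDer (fun s => Cadd (f s) (g s)) t (Cadd df dg).
Proof. intros [F1 F2] [G1 G2]. split; apply isd_plus; auto. Qed.

Lemma CDer_inv f t df : CDer f t df -> f t <> C0 ->
  CDer (fun s => Cinv (f s)) t (Cscal (-1) (Cmul df (Cinv (Cmul (f t) (f t))))).
Proof.
  intros [F1 F2] Hf. pose proof (Cnorm2_pos _ Hf) as Hn.
  assert (HN : is_derive (fun s => Re (f s) * Re (f s) + Im (f s) * Im (f s)) t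
     (Re df * Re (f t) + Re (f t) * Re df + (Im df * Im (f t) + Im (f t) * Im df))).
  { apply isd_plus; apply isd_mult; auto. }
  assert (Hn' : Re (f t) * Re (f t) + Im (f t) * Im (f t) <> 0) by (unfold Cnorm2 in Hn; lra).
  pose proof (is_derive_inv _ _ _ HN Hn') as HI.
  split.
  - apply (isd_ext (fun s => Re (f s) * / (Re (f s) * Re (f s) + Im (f s) * Im (f s)))).
    { intro s. unfold Cinv, Cnorm2, Re at 3, Rdiv. simpl. reflexivity. }
    eapply isd_eq. apply isd_mult. exact F1. exact HI.
    unfold Cinv, Cmul, Cscal, Cnorm2, Re, Im in *. simpl in *. field. split; auto.
    set (a := fst (f t)) in *. set (b := snd (f t)) in *.
    replace ((a*a - b*b)*(a*a-b*b) + (a*b+b*a)*(a*b+b*a)) with ((a*a+b*b)*(a*a+b*b)) by ring.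
    apply Rmult_integral_contrapositive; auto.
  - apply (isd_ext (fun s => - Im (f s) * / (Re (f s) * Re (f s) + Im (f s) * Im (f s)))).
    { intro s. unfold Cinv, Cnorm2, Im at 3, Rdiv. simpl. reflexivity. }
    eapply isd_eq. apply isd_mult. apply (isd_opp _ _ _ F2). exact HI.
    unfold Cinv, Cmul, Cscal, Cnorm2, Re, Im in *. simpl in *. field. split; auto.
    set (a := fst (f t)) in *. set (b := snd (f t)) in *.
    replace ((a*a - b*b)*(a*a-b*b) + (a*b+b*a)*(a*b+b*a)) with ((a*a+b*b)*(a*a+b*b)) by ring.
    apply Rmult_integral_contrapositive; auto.
Qed.

Lemma CDer_pow f t df n : CDer f t df ->
  CDer (fun s => Cpow (f s) n) t (Cmul (Cscal (INR n) df) (Cpow (f t) (pred n))).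
Proof.
  intro H. induction n.
  - simpl. eapply CDer_val. apply CDer_const. ceq.
  - simpl Cpow. eapply CDer_val. apply CDer_mul; eauto.
    destruct n. simpl. ceq. simpl pred. rewrite !S_INR. simpl Cpow. ceq.
Qed.

Lemma CDer_eps f t d : CDer f t d -> forall e, 0 < e -> exists del, 0 < del /\ forall h, h <> 0 -> Rabs h < del ->
  Cabs (Csub (Cscal (/h) (Csub (f (t+h)) (f t))) d) < e.
Proof.
  intros [H1 H2] e He.
  apply is_derive_Reals in H1. apply is_derive_Reals in H2.
  destruct (H1 (e/2) ltac:(lra)) as [d1 Hd1]. destruct (H2 (e/2) ltac:(lra)) as [d2 Hd2].
  exists (Rmin d1 d2). split. apply Rmin_pos; apply cond_pos.
  intros h Hh Hlt. eapply Rle_lt_trans. apply Cabs_le_ReIm.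
  specialize (Hd1 h Hh (Rlt_le_trans _ _ _ Hlt (Rmin_l _ _))).
  specialize (Hd2 h Hh (Rlt_le_trans _ _ _ Hlt (Rmin_r _ _))).
  unfold Csub, Cscal, Re, Im in *; simpl in *.
  replace (/ h * (fst (f (t + h)) - fst (f t)) - fst d) with ((fst (f (t + h)) - fst (f t)) / h - fst d) by (field; auto).
  replace (/ h * (snd (f (t + h)) - snd (f t)) - snd d) with ((snd (f (t + h)) - snd (f t)) / h - snd d) by (field; auto).
  lra.
Qed.

Lemma CDer_of_eps f t d : (forall e, 0 < e -> exists del, 0 < del /\ forall h, h <> 0 -> Rabs h < del ->
  Cabs (Csub (Cscal (/h) (Csub (f (t+h)) (f t))) d) < e) -> CDer f t d.
Proof.
  intro H. split; apply is_derive_Reals; intros e He; destruct (H e He) as [del [Hd Hb]];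
    exists (mkposreal del Hd); intros h Hh Hlt; specialize (Hb h Hh Hlt).
  - eapply Rle_lt_trans; [|exact Hb]. eapply Rle_trans; [|apply Re_le_Cabs].
    unfold Csub, Cscal, Re, Im; simpl. right. f_equal. field. auto.
  - eapply Rle_lt_trans; [|exact Hb]. eapply Rle_trans; [|apply Im_le_Cabs].
    unfold Csub, Cscal, Re, Im; simpl. right. f_equal. field. auto.
Qed.

Definition HolAt (X : Cx -> Cx) (z0 X' : Cx) :=
  exists rho C, 0 < rho /\ 0 <= C /\ forall w, Cabs (Csub w z0) < rho ->
    Cabs (Csub (Csub (X w) (X z0)) (Cmul (Csub w z0) X')) <= C * Cabs (Csub w z0) ^ 2.

Lemma CDer_comp_hol X X' g t g' : HolAt X (g t) X' -> CDer g t g' ->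
  CDer (fun s => X (g s)) t (Cmul X' g').
Proof.
  intros [rho [C [Hrho [HC HX]]]] Hg. apply CDer_of_eps. intros e He.
  set (A := Cabs g'). set (B := Cabs X').
  assert (HA : 0 <= A) by apply Cabs_ge0. assert (HB : 0 <= B) by apply Cabs_ge0.
  set (eta := Rmin 1 (e / (2 * (B + 1)))).
  assert (Heta : 0 < eta) by (apply Rmin_pos; [lra| apply Rdiv_lt_0_compat; lra]).
  assert (Heta1 : eta <= 1) by apply Rmin_l.
  assert (Heta2 : eta <= e / (2 * (B+1))) by apply Rmin_r.
  destruct (CDer_eps g t g' Hg eta Heta) as [d1 [Hd1 Hb1]].
  set (M := (C+1) * ((A+1)*(A+1))).
  assert (HM : 0 < M) by (unfold M; apply Rmult_lt_0_compat; nra).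
  exists (Rmin d1 (Rmin (rho / (A+1)) (e / (2 * M)))). split.
  { apply Rmin_pos; auto. apply Rmin_pos; apply Rdiv_lt_0_compat; lra. }
  intros h Hh Hlt.
  assert (Hl1 : Rabs h < d1) by (eapply Rlt_le_trans; [exact Hlt| apply Rmin_l]).
  assert (Hl2 : Rabs h < rho / (A+1)) by (eapply Rlt_le_trans; [exact Hlt| eapply Rle_trans; [apply Rmin_r|apply Rmin_l]]).
  assert (Hl3 : Rabs h < e / (2*M)) by (eapply Rlt_le_trans; [exact Hlt| eapply Rle_trans; [apply Rmin_r|apply Rmin_r]]).
  specialize (Hb1 h Hh Hl1).
  set (w := g (t+h)) in *. set (z0 := g t) in *.
  set (D := Cscal (/h) (Csub w z0)) in *.
  assert (HD : Cabs D <= A + 1).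
  { pose proof (Cabs_sub_tri D g' C0). replace (Csub D C0) with D in H by ceq.
    replace (Csub g' C0) with g' in H by ceq. fold A in H. lra. }
  assert (Hwz : Csub w z0 = Cscal h D) by (unfold D; cfield; auto).
  assert (Hh0 : 0 < Rabs h) by (apply Rabs_pos_lt; auto).
  assert (Hwz_abs : Cabs (Csub w z0) = Rabs h * Cabs D) by (rewrite Hwz, Cabs_scal; auto).
  assert (Hclose : Cabs (Csub w z0) < rho).
  { rewrite Hwz_abs. apply Rle_lt_trans with (Rabs h * (A+1)). apply Rmult_le_compat_l; lra.
    apply Rmult_lt_reg_r with (/(A+1)). apply Rinv_0_lt_compat; lra.
    replace (Rabs h * (A + 1) * / (A + 1)) with (Rabs h) by (field; lra). exact Hl2. }
  specialize (HX w Hclose).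
  assert (Eid : Csub (Cscal (/ h) (Csub (X w) (X z0))) (Cmul X' g') =
     Cadd (Cscal (/h) (Csub (Csub (X w) (X z0)) (Cmul (Csub w z0) X'))) (Cmul X' (Csub D g'))).
  { unfold D. cfield; auto. }
  rewrite Eid. eapply Rle_lt_trans. apply Cabs_add.
  rewrite Cabs_scal, Cabs_mul. fold B.
  assert (T1 : Rabs (/h) * Cabs (Csub (Csub (X w) (X z0)) (Cmul (Csub w z0) X')) <= Rabs h * (C * ((A+1)*(A+1)))).
  { rewrite Rabs_inv. apply Rmult_le_reg_l with (Rabs h); auto.
    rewrite <- Rmult_assoc, Rinv_r, Rmult_1_l by lra.
    eapply Rle_trans. exact HX. rewrite Hwz_abs.
    pose proof (Cabs_ge0 D).
    assert (Cabs D * Cabs D <= (A+1)*(A+1)) by nra.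
    replace (C * (Rabs h * Cabs D) ^ 2) with (C * (Rabs h * Rabs h) * (Cabs D * Cabs D)) by ring.
    replace (Rabs h * (Rabs h * (C * ((A + 1) * (A + 1))))) with (C * (Rabs h * Rabs h) * ((A+1)*(A+1))) by ring.
    apply Rmult_le_compat_l; auto. nra. }
  assert (T1' : Rabs h * (C * ((A+1)*(A+1))) < e / 2).
  { apply Rle_lt_trans with (Rabs h * M). apply Rmult_le_compat_l. lra. unfold M. nra.
    apply Rmult_lt_reg_r with (/ M). apply Rinv_0_lt_compat; auto.
    replace (e / 2 * / M) with (e / (2 * M)) by (field; lra).
    replace (Rabs h * M * / M) with (Rabs h) by (field; lra). auto. }
  assert (T2 : B * Cabs (Csub D g') < e / 2).
  { apply Rle_lt_trans with (B * eta). apply Rmult_le_compat_l; lra.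
    apply Rle_lt_trans with (B * (e / (2 * (B + 1)))). apply Rmult_le_compat_l; lra.
    apply Rmult_lt_reg_r with (2 * (B+1)). lra.
    replace (B * (e / (2 * (B + 1))) * (2 * (B + 1))) with (B * e) by (field; lra). nra. }
  lra.
Qed.

Lemma HolAt_PS b z0 : good b -> Cabs z0 < 1 -> HolAt (PS b) z0 (PS (deriv b) z0).
Proof.
  intros Hb Hz. pose proof (Cabs_ge0 z0).
  set (R := (1 + Cabs z0)/2).
  destruct (PS_quad b R Hb ltac:(unfold R; lra)) as [C [HC HQ]].
  exists (R - Cabs z0), C. split. unfold R; lra. split; auto.
  intros w Hw. apply HQ; [|unfold R; lra].
  pose proof (Cabs_sub_tri w z0 C0). replace (Csub w C0) with w in H0 by ceq.
  replace (Csub z0 C0) with z0 in H0 by ceq. lra.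
Qed.

Definition ContAt (X : Cx -> Cx) (z0 : Cx) :=
  forall e, 0 < e -> exists d, 0 < d /\ forall w, Cabs (Csub w z0) < d -> Cabs (Csub (X w) (X z0)) < e.

Lemma HolAt_cont X z0 X' : HolAt X z0 X' -> ContAt X z0.
Proof.
  intros [rho [C [Hrho [HC HX]]]] e He.
  set (B := Cabs X'). assert (HB : 0 <= B) by apply Cabs_ge0.
  set (L := B + C * rho + 1).
  assert (HL : 0 < L) by (unfold L; nra).
  exists (Rmin rho (e / L)). split. apply Rmin_pos; auto. apply Rdiv_lt_0_compat; lra.
  intros w Hw. assert (Hw1 : Cabs (Csub w z0) < rho) by (eapply Rlt_le_trans; [exact Hw|apply Rmin_l]).
  assert (Hw2 : Cabs (Csub w z0) < e / L) by (eapply Rlt_le_trans; [exact Hw|apply Rmin_r]).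
  specialize (HX w Hw1).
  set (k := Cabs (Csub w z0)) in *. assert (Hk : 0 <= k) by apply Cabs_ge0.
  replace (Csub (X w) (X z0)) with (Cadd (Csub (Csub (X w) (X z0)) (Cmul (Csub w z0) X')) (Cmul (Csub w z0) X')) by ceq.
  eapply Rle_lt_trans. apply Cabs_add. rewrite Cabs_mul. fold k B.
  assert (0 <= C * k * (rho - k)) by (apply Rmult_le_pos; [apply Rmult_le_pos|]; lra).
  assert (C * k ^ 2 <= C * rho * k) by (simpl; nra).
  assert (k * L < e). { apply Rmult_lt_reg_r with (/L). apply Rinv_0_lt_compat; lra.
    replace (k * L * / L) with k by (field; lra). replace (e * / L) with (e / L) by (unfold Rdiv; ring). auto. }
  unfold L in *. nra.
Qed.

Definition C2 (F : R -> R -> Cx) x y :=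
  continuity_2d_pt (fun u v => Re (F u v)) x y /\ continuity_2d_pt (fun u v => Im (F u v)) x y.

Lemma C2_ext F G x y : (forall u v, F u v = G u v) -> C2 F x y -> C2 G x y.
Proof. intros E [H1 H2]. split.
  apply (continuity_2d_pt_ext (fun u v => Re (F u v))); auto; intros; rewrite E; auto.
  apply (continuity_2d_pt_ext (fun u v => Im (F u v))); auto; intros; rewrite E; auto. Qed.

Lemma C2_const c x y : C2 (fun _ _ => c) x y.
Proof. split; apply continuity_2d_pt_const. Qed.

Lemma C2_add F G x y : C2 F x y -> C2 G x y -> C2 (fun u v => Cadd (F u v) (G u v)) x y.
Proof. intros [F1 F2] [G1 G2]. split; apply continuity_2d_pt_plus; auto. Qed.

Lemma C2_mul F G x y : C2 F x y -> C2 G x y -> C2 (fun u v => Cmul (F u v) (G u v)) x y.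
Proof.
  intros [F1 F2] [G1 G2]. split.
  - apply continuity_2d_pt_minus; apply continuity_2d_pt_mult; auto.
  - apply continuity_2d_pt_plus; apply continuity_2d_pt_mult; auto.
Qed.

Lemma C2_scal (c : R) F x y : C2 F x y -> C2 (fun u v => Cscal c (F u v)) x y.
Proof. intros [F1 F2]. split; apply continuity_2d_pt_mult; auto; apply continuity_2d_pt_const. Qed.

Lemma C2_inv F x y : C2 F x y -> F x y <> C0 -> C2 (fun u v => Cinv (F u v)) x y.
Proof.
  intros [F1 F2] Hn. pose proof (Cnorm2_pos _ Hn) as Hp.
  assert (HN : continuity_2d_pt (fun u v => Cnorm2 (F u v)) x y).
  { unfold Cnorm2. apply continuity_2d_pt_plus; apply continuity_2d_pt_mult; auto. }
  split.
  - eapply continuity_2d_pt_ext. intros u v. unfold Cinv, Re at 1; simpl. unfold Rdiv. reflexivity.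
    apply continuity_2d_pt_mult; auto. apply continuity_2d_pt_inv; auto. lra.
  - eapply continuity_2d_pt_ext. intros u v. unfold Cinv, Im at 1; simpl. unfold Rdiv. reflexivity.
    apply continuity_2d_pt_mult; auto. apply continuity_2d_pt_opp; auto. apply continuity_2d_pt_inv; auto. lra.
Qed.

Lemma C2_pow F x y n : C2 F x y -> C2 (fun u v => Cpow (F u v) n) x y.
Proof. intro H. induction n; simpl. apply C2_const. apply C2_mul; auto. Qed.

Lemma C2_comp X G x y : ContAt X (G x y) -> C2 G x y -> C2 (fun u v => X (G u v)) x y.
Proof.
  intros HX [G1 G2].
  assert (key : forall eps : posreal, locally_2d (fun u v => Cabs (Csub (X (G u v)) (X (G x y))) < eps) x y).
  { intro eps. destruct (HX eps (cond_pos eps)) as [d [Hd Hw]].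
    pose proof (G1 (mkposreal (d/2) ltac:(lra))) as L1. pose proof (G2 (mkposreal (d/2) ltac:(lra))) as L2.
    eapply locally_2d_impl; [|apply (locally_2d_and _ _ _ _ L1 L2)].
    apply locally_2d_forall. intros u v [H1 H2]. simpl in H1, H2. apply Hw.
    eapply Rle_lt_trans. apply Cabs_le_ReIm. unfold Csub, Re, Im in *; simpl in *. lra. }
  split; intro eps; eapply locally_2d_impl; try apply (key eps); apply locally_2d_forall; intros u v H;
    eapply Rle_lt_trans; try exact H.
  - replace (Re (X (G u v)) - Re (X (G x y))) with (Re (Csub (X (G u v)) (X (G x y)))) by reflexivity. apply Re_le_Cabs.
  - replace (Im (X (G u v)) - Im (X (G x y))) with (Im (Csub (X (G u v)) (X (G x y)))) by reflexivity. apply Im_le_Cabs.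
Qed.

Definition gam (r t : R) : Cx := (r * cos t, r * sin t).
Definition eit (t : R) : Cx := (cos t, sin t).

Lemma C2_gam x y : C2 gam x y.
Proof.
  split; apply continuity_2d_pt_mult; try apply continuity_2d_pt_id1;
  apply continuity_1d_2d_pt_comp; try apply continuity_2d_pt_id2.
  apply continuity_cos. apply continuity_sin.
Qed.

Lemma C2_eit x y : C2 (fun _ v => eit v) x y.
Proof.
  split; apply continuity_1d_2d_pt_comp; try apply continuity_2d_pt_id2.
  apply continuity_cos. apply continuity_sin.
Qed.

Lemma Cabs_gam r t : Cabs (gam r t) = Rabs r.
Proof.
  unfold Cabs, gam, Cnorm2, Re, Im; simpl.
  replace (r * cos t * (r * cos t) + r * sin t * (r * sin t)) with (r * r * (Rsqr (sin t) + Rsqr (cos t))) by (unfold Rsqr; ring).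
  rewrite sin2_cos2, Rmult_1_r. apply sqrt_Rsqr_abs.
Qed.

Lemma C2_PS c x y : good c -> Rabs x < 1 -> C2 (fun u v => PS c (gam u v)) x y.
Proof.
  intros Hc Hx. apply C2_comp. eapply HolAt_cont. apply HolAt_PS; auto. rewrite Cabs_gam; auto.
  apply C2_gam.
Qed.

Lemma CDer_gam_r r t : CDer (fun s => gam s t) r (eit t).
Proof.
  split; unfold gam, eit, Re, Im; simpl.
  - eapply isd_eq. apply isd_mult. apply isd_id. apply isd_const. cbv beta; ring.
  - eapply isd_eq. apply isd_mult. apply isd_id. apply isd_const. cbv beta; ring.
Qed.

Lemma CDer_gam_t r t : CDer (fun s => gam r s) t (Cmul CI (gam r t)).
Proof.
  split; unfold gam, CI, Cmul, Re, Im; simpl.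
  - eapply isd_eq. apply isd_mult. apply isd_const. apply is_derive_cos. simpl. ring.
  - eapply isd_eq. apply isd_mult. apply isd_const. apply is_derive_sin. cbv beta; ring.
Qed.

Ltac cgen3 := repeat match goal with
  | |- context [Cinv ?z] => generalize (Cinv z); intro
  | |- context [PS ?b ?z] => generalize (PS b z); intro
  | |- context [Cpow ?z ?n] => generalize (Cpow z n); intro
  | |- context [?b ?n] => lazymatch type of b with nat -> Cx => generalize (b n); intro end
  end.
Ltac ceq3 := cbv beta; cgen3; cdestr; cunfold; f_equal; ring.

Definition Fn e b J z := Cmul (Cmul (Cpow z J) (PS e z)) (Cinv (PS b z)).
Definition FnD e b J z :=
  Cadd (Cmul (Cadd (Cmul (Cmul (Cscal (INR J) C1) (Cpow z (pred J))) (PS e z)) (Cmul (Cpow z J) (PS (deriv e) z))) (Cinv (PS b z)))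
       (Cmul (Cmul (Cpow z J) (PS e z)) (Cscal (-1) (Cmul (PS (deriv b) z) (Cinv (Cmul (PS b z) (PS b z)))))).

Lemma good_deriv' b : good b -> good (deriv b).
Proof. apply good_deriv. Qed.

Definition NZ b := forall z, Cabs z < 1 -> PS b z <> C0.

Lemma CDer_Fn e b J g t g' : good e -> good b -> NZ b -> CDer g t g' -> Cabs (g t) < 1 ->
  CDer (fun s => Fn e b J (g s)) t (Cmul (FnD e b J (g t)) g').
Proof.
  intros He Hb Hnz Hg Hgt.
  pose proof (CDer_pow g t g' J Hg) as Hp.
  pose proof (CDer_comp_hol (PS e) _ g t g' (HolAt_PS e (g t) He Hgt) Hg) as HE.
  pose proof (CDer_comp_hol (PS b) _ g t g' (HolAt_PS b (g t) Hb Hgt) Hg) as HB.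
  pose proof (CDer_inv _ t _ HB (Hnz _ Hgt)) as HI.
  eapply CDer_val. unfold Fn. apply (CDer_mul _ _ _ _ _ (CDer_mul _ _ _ _ _ Hp HE) HI).
  unfold FnD. ceq3.
Qed.

Lemma Cmul_nz z w : z <> C0 -> w <> C0 -> Cmul z w <> C0.
Proof.
  intros Hz Hw E. pose proof (Cnorm2_pos _ Hz). pose proof (Cnorm2_pos _ Hw).
  assert (Cnorm2 (Cmul z w) = 0) by (rewrite E; unfold Cnorm2, C0, Re, Im; simpl; ring).
  rewrite Cnorm2_mul in H1. nra.
Qed.

Ltac c2 := match goal with
| |- C2 (fun u v => Cmul (@?F u v) (@?G u v)) _ _ => apply (C2_mul F G)
| |- C2 (fun u v => Cadd (@?F u v) (@?G u v)) _ _ => apply (C2_add F G)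
| |- C2 (fun u v => Cscal ?c (@?F u v)) _ _ => apply (C2_scal c F)
| |- C2 (fun u v => Cpow (@?F u v) ?n) _ _ => apply (C2_pow F _ _ n)
| |- C2 (fun u v => Cinv (@?F u v)) _ _ => apply (C2_inv F)
| |- C2 (fun u v => PS ?c (gam u v)) _ _ => apply C2_PS
| |- C2 (fun u v => gam u v) _ _ => apply C2_gam
| |- C2 (fun u v => eit v) _ _ => apply C2_eit
| |- C2 (fun u v => ?c) _ _ => apply C2_const
end.

Lemma C2_FnD e b J x y : good e -> good b -> NZ b -> Rabs x < 1 ->
  C2 (fun u v => Cmul (FnD e b J (gam u v)) (eit v)) x y.
Proof.
  intros He Hb Hnz Hx. assert (Hg : Cabs (gam x y) < 1) by (rewrite Cabs_gam; auto).
  unfold FnD. repeat (c2; auto using good_deriv'). apply Cmul_nz; apply Hnz; auto.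
Qed.

Lemma minus_R (a b : R) : minus a b = a - b.
Proof. reflexivity. Qed.

Lemma int_cos0 : is_RInt cos 0 (2*PI) 0.
Proof.
  assert (H : is_RInt cos 0 (2*PI) (minus (sin (2*PI)) (sin 0))).
  { apply (is_RInt_derive sin cos). intros; apply is_derive_sin.
    intros. apply continuity_pt_filterlim. apply continuity_cos. }
  rewrite minus_R, sin_2PI, sin_0, Rminus_0_r in H. exact H.
Qed.

Lemma int_sin0 : is_RInt sin 0 (2*PI) 0.
Proof.
  assert (H : is_RInt sin 0 (2*PI) (minus (- cos (2*PI)) (- cos 0))).
  { apply (is_RInt_derive (fun x => - cos x) sin). intros.
    eapply isd_eq. apply isd_opp. apply is_derive_cos. ring.
    intros. apply continuity_pt_filterlim. apply continuity_sin. }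
  rewrite minus_R, cos_2PI, cos_0 in H. replace (- (1) - - (1)) with 0 in H by ring. exact H.
Qed.

Lemma cont2d_snd f x y : continuity_2d_pt f x y -> continuous (fun v => f x v) y.
Proof.
  intro H. apply continuity_pt_filterlim.
  unfold continuity_pt, continue_in, limit1_in, limit_in. intros eps Heps.
  destruct (H (mkposreal eps Heps)) as [d Hd]. exists d. split. apply cond_pos.
  intros v [_ Hv]. simpl in *. unfold R_dist in *. apply Hd; auto. rewrite Rminus_diag, Rabs_R0. apply cond_pos.
Qed.

Lemma locally_of_abs x eps (P : R -> Prop) : 0 < eps -> (forall y, Rabs (y - x) < eps -> P y) -> locally x P.
Proof. intros He H. exists (mkposreal eps He). intros y Hy. apply H. exact Hy. Qed.

Lemma isR_scal (f : R -> R) a b l k : is_RInt f a b l -> is_RInt (fun t => k * f t) a b (k * l).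
Proof. intro H. exact (@is_RInt_scal R_NormedModule f a b k l H). Qed.

Lemma isR_minus (f g : R -> R) a b l1 l2 : is_RInt f a b l1 -> is_RInt g a b l2 -> is_RInt (fun t => f t - g t) a b (l1 - l2).
Proof. intros H1 H2. exact (@is_RInt_minus R_NormedModule f g a b l1 l2 H1 H2). Qed.

Lemma Fn_zero e b J : (1 <= J)%nat -> Fn e b J (0,0) = C0.
Proof.
  intro HJ. destruct J as [|J']. lia. unfold Fn. simpl Cpow.
  generalize (Cpow (0,0) J') (PS e (0,0)) (Cinv (PS b (0,0))). intros. cdestr. cunfold. f_equal; ring.
Qed.

Section Cauchy.
Variables (e b : nat -> Cx) (J : nat).
Hypotheses (He : good e) (Hb : good b) (Hnz : NZ b) (HJ : (1 <= J)%nat).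

Let f := fun r t => Re (Fn e b J (gam r t)).
Let df := fun r t => Re (Cmul (FnD e b J (gam r t)) (eit t)).

Lemma HA r t : Rabs r < 1 -> is_derive (fun u => f u t) r (df r t).
Proof.
  intro Hr. pose proof (CDer_Fn e b J (fun s => gam s t) r (eit t) He Hb Hnz (CDer_gam_r r t)) as H.
  assert (Hg : Cabs ((fun s => gam s t) r) < 1) by (cbv beta; rewrite Cabs_gam; auto).
  destruct (H Hg) as [H1 _]. exact H1.
Qed.

Lemma HB r t : Rabs r < 1 -> CDer (fun s => Fn e b J (gam r s)) t (Cmul (FnD e b J (gam r t)) (Cmul CI (gam r t))).
Proof.
  intro Hr. apply (CDer_Fn e b J (fun s => gam r s) t _ He Hb Hnz (CDer_gam_t r t)). rewrite Cabs_gam; auto.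
Qed.

Lemma HC r t : Rabs r < 1 -> continuity_2d_pt df r t.
Proof. intro Hr. apply (C2_FnD e b J r t He Hb Hnz Hr). Qed.

Lemma HD x : Rabs x < 1 -> is_derive (fun r => RInt (fun t => f r t) 0 (2*PI)) x (RInt (fun t => df x t) 0 (2*PI)).
Proof.
  intro Hx. assert (Hd : 0 < (1 - Rabs x)/2) by lra.
  assert (Hloc : forall y, Rabs (y - x) < (1 - Rabs x)/2 -> Rabs y < 1).
  { intros y Hy. pose proof (Rabs_triang_inv y x). lra. }
  assert (E : RInt (fun t => df x t) 0 (2*PI) = RInt (fun t => Derive (fun u => f u t) x) 0 (2*PI)).
  { apply RInt_ext. intros t _. symmetry. apply is_derive_unique. apply HA; auto. }
  rewrite E. apply is_derive_RInt_param.
  - apply locally_of_abs with ((1 - Rabs x)/2); auto. intros y Hy t _. eexists. apply HA. auto.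
  - intros t _. apply continuity_2d_pt_ext_loc with df.
    + exists (mkposreal _ Hd). intros u v Hu _. simpl in Hu. symmetry. apply is_derive_unique. apply HA. auto.
    + apply HC; auto.
  - apply locally_of_abs with ((1 - Rabs x)/2); auto. intros y Hy.
    apply (@ex_RInt_continuous R_CompleteNormedModule). intros z _. apply (@ex_derive_continuous R_AbsRing R_NormedModule). eexists.
    destruct (HB y z (Hloc y Hy)) as [H1 _]. exact H1.
Qed.

Lemma gam_2PI r : gam r (2*PI) = gam r 0.
Proof. unfold gam. rewrite cos_2PI, sin_2PI, cos_0, sin_0. reflexivity. Qed.

Lemma HE x : 0 < x < 1 -> RInt (fun t => df x t) 0 (2*PI) = 0.
Proof.
  intro Hx. assert (Hx1 : Rabs x < 1) by (rewrite Rabs_right; lra).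
  set (gI := fun t => Im (Fn e b J (gam x t))).
  assert (H : is_RInt (fun t => x * df x t) 0 (2*PI) (minus (gI (2*PI)) (gI 0))).
  { apply (is_RInt_derive gI). intros t _.
    destruct (HB x t Hx1) as [_ H2]. eapply isd_eq. exact H2.
    unfold df. generalize (FnD e b J (gam x t)). intro c. unfold gam, eit, CI, Cmul, Re, Im; simpl. ring.
    intros t _. apply (cont2d_snd (fun u v => x * df u v)).
    apply continuity_2d_pt_mult. apply continuity_2d_pt_const. apply HC; auto. }
  unfold gI in H. rewrite gam_2PI, minus_R, Rminus_diag in H.
  apply (isR_scal _ _ _ _ (/ x)) in H. rewrite Rmult_0_r in H.
  apply (@is_RInt_unique R_CompleteNormedModule). eapply (@is_RInt_ext R_NormedModule); [|exact H].
  intros t _. simpl. field. lra.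
Qed.
Lemma gam0 t : gam 0 t = (0, 0).
Proof. unfold gam. f_equal; ring. Qed.

Lemma HF : RInt (fun t => df 0 t) 0 (2*PI) = 0.
Proof.
  apply (@is_RInt_unique R_CompleteNormedModule).
  set (c := FnD e b J (0,0)).
  pose proof (isR_minus _ _ _ _ _ _ (isR_scal _ _ _ _ (Re c) int_cos0) (isR_scal _ _ _ _ (Im c) int_sin0)) as H.
  replace (Re c * 0 - Im c * 0) with 0 in H by ring.
  eapply (@is_RInt_ext R_NormedModule); [|exact H].
  intros t _. unfold df. rewrite gam0. fold c. unfold Cmul, eit, Re, Im; simpl. ring.
Qed.

Lemma f0 t : f 0 t = 0.
Proof.
  unfold f. rewrite gam0, Fn_zero by auto. reflexivity.
Qed.

Lemma exRInt_f r : Rabs r < 1 -> ex_RInt (fun t => f r t) 0 (2*PI).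
Proof.
  intro Hr. apply (@ex_RInt_continuous R_CompleteNormedModule). intros z _. apply (@ex_derive_continuous R_AbsRing R_NormedModule). eexists.
  destruct (HB r z Hr) as [H1 _]. exact H1.
Qed.

Lemma cauchy_re rho : 0 <= rho < 1 -> is_RInt (fun t => Re (Fn e b J (gam rho t))) 0 (2*PI) 0.
Proof.
  intro Hr.
  set (K := fun r => RInt (fun t => f r t) 0 (2*PI)).
  assert (K0 : K 0 = 0).
  { unfold K. apply (@is_RInt_unique R_CompleteNormedModule).
    pose proof (isR_scal _ _ _ _ 0 int_cos0) as H. rewrite Rmult_0_r in H.
    eapply (@is_RInt_ext R_NormedModule); [|exact H]. intros t _. cbv beta. rewrite f0. apply Rmult_0_l. }
  assert (Kr : K rho = 0).
  { destruct (Req_dec rho 0) as [E|E]. subst; auto.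
    rewrite <- K0. symmetry. apply (@eq_is_derive R_NormedModule K 0 rho); [|lra].
    intros t Ht. assert (Ht1 : Rabs t < 1) by (rewrite Rabs_right; lra).
    pose proof (HD t Ht1) as H.
    destruct (Req_dec t 0) as [E0|E0].
    - subst t. rewrite HF in H. exact H.
    - rewrite HE in H by lra. exact H. }
  assert (Hr1 : Rabs rho < 1) by (rewrite Rabs_right; lra).
  pose proof (RInt_correct _ _ _ (exRInt_f rho Hr1)) as H.
  fold (K rho) in H. rewrite Kr in H. exact H.
Qed.
End Cauchy.

Lemma cauchy_im e b J rho : good e -> good b -> NZ b -> (1 <= J)%nat -> 0 <= rho < 1 ->
  is_RInt (fun t => Im (Fn e b J (gam rho t))) 0 (2*PI) 0.
Proof.
  intros He Hb Hnz HJ Hr.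
  pose proof (cauchy_re (fun n => Cmul (0,-1) (e n)) b J (good_mul e _ He) Hb Hnz HJ rho Hr) as H.
  eapply (@is_RInt_ext R_NormedModule); [|exact H]. intros t _.
  unfold Fn. rewrite PS_mul; auto. 2: rewrite Cabs_gam; rewrite Rabs_right; lra.
  cgen3. cdestr. cunfold. ring.
Qed.

Lemma cauchy_C C e b J rho : good e -> good b -> NZ b -> (1 <= J)%nat -> 0 <= rho < 1 ->
  is_RInt (fun t => Re (Cmul C (Fn e b J (gam rho t)))) 0 (2*PI) 0.
Proof.
  intros He Hb Hnz HJ Hr.
  pose proof (isR_minus _ _ _ _ _ _ (isR_scal _ _ _ _ (Re C) (cauchy_re e b J He Hb Hnz HJ rho Hr))
     (isR_scal _ _ _ _ (Im C) (cauchy_im e b J rho He Hb Hnz HJ Hr))) as H.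
  replace (Re C * 0 - Im C * 0) with 0 in H by ring.
  eapply (@is_RInt_ext R_NormedModule); [|exact H]. intros t _. unfold Cmul, Re, Im; simpl. ring.
Qed.

Lemma good_of_analytic a : analytic_on_D a -> good a.
Proof.
  intros Ha r Hr.
  assert (Hz : in_D (r, 0)) by (unfold in_D, Cnorm2, Re, Im; simpl; nra).
  destruct (Ha _ Hz) as [s [H1 H2]].
  assert (B : forall (u : nat -> R) l, Un_cv (fun N => sum_f_R0 u N) l -> exists M, forall n, Rabs (u n) <= M).
  { intros u l Hu. apply bounded_of_cv0. apply is_lim_seq_Reals. apply ex_series_lim_0.
    exists l. apply is_series_Reals. exact Hu. }
  destruct (B _ _ H1) as [M1 HM1]. destruct (B _ _ H2) as [M2 HM2].
  exists (M1 + M2). intro n.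
  assert (Cabs (Cmul (a n) (Cpow (r,0) n)) = Cabs (a n) * r ^ n).
  { rewrite Cabs_mul, Cabs_pow. f_equal. f_equal. unfold Cabs, Cnorm2, Re, Im; simpl.
    replace (r*r+0*0) with (r*r) by ring. apply sqrt_square. lra. }
  rewrite <- H. eapply Rle_trans. apply Cabs_le_ReIm. specialize (HM1 n). specialize (HM2 n). lra.
Qed.

Definition delta0 (n : nat) : Cx := match n with O => C1 | _ => C0 end.

Lemma good_delta0 : good delta0.
Proof. apply good_fin with O. intros [|n] H. lia. reflexivity. Qed.

Lemma PS_zero z : PS (fun _ => C0) z = C0.
Proof.
  unfold PS, CS, term, C0. f_equal; (transitivity (Series (fun _:nat => 0)); [apply Series_ext; intro n; unfold Cmul, Re, Im; simpl; ring | apply Series_zero]).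
Qed.

Lemma PS_delta0 z : Cabs z < 1 -> PS delta0 z = C1.
Proof.
  intro Hz. rewrite PS_shift; auto using good_delta0. simpl.
  rewrite PS_zero. ceq.
Qed.

Lemma NZ_delta0 : NZ delta0.
Proof. intros z Hz. rewrite PS_delta0 by auto. unfold C1, C0. intro E; inversion E. lra. Qed.

Lemma Fn_delta0 J z : Cabs z < 1 -> Fn delta0 delta0 J z = Cpow z J.
Proof.
  intro Hz. unfold Fn. rewrite PS_delta0 by auto.
  replace (Cinv C1) with C1 by (unfold Cinv, C1, Cnorm2, Re, Im; simpl; f_equal; field).
  ceq3.
Qed.

Lemma good_sub b c : good b -> good c -> good (fun n => Csub (b n) (c n)).
Proof.
  intros Hb Hc. eapply good_ext; [|apply (good_plus _ _ Hb (good_mul c (-1,0) Hc))].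
  intro n. ceq.
Qed.

Lemma PS_sub b c z : good b -> good c -> Cabs z < 1 -> PS (fun n => Csub (b n) (c n)) z = Csub (PS b z) (PS c z).
Proof.
  intros Hb Hc Hz. unfold PS. rewrite <- CS_sub by (apply good_absconv; auto).
  apply CS_ext. intro n. unfold term. ceq.
Qed.

Section ClassG.
Variable a : nat -> Cx.
Hypothesis HG : class_G 1 a.

Definition bg n := Cscal (INR (n + 1)) (a (n + 1)%nat).
Definition b2 n := Cscal (INR ((n + 2) * (n + 1))) (a (n + 2)%nat).
Definition Nn n := Cadd (bg n) (Cmul (-2, 0) (shiftR b2 n)).
Definition c1 := Cscal (-4) (a 2%nat).
Definition c2 := Csub (Cscal 8 (Cmul (a 2%nat) (a 2%nat))) (Cscal 12 (a 3%nat)).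
Definition D1 n := Csub (Nn n) (bg n).
Definition E1 n := D1 (S n).
Definition D2 n := Csub (D1 n) (Cmul c1 (shiftR bg n)).
Definition E2 n := D2 (S (S n)).
Definition D3 n := Csub (D2 n) (Cmul c2 (shiftR (shiftR bg) n)).
Definition E3 n := D3 (S (S (S n))).

Lemma good_a : good a.
Proof. destruct HG as [[Ha _] _]. apply good_of_analytic; auto. Qed.

Lemma a1 : a 1%nat = C1.
Proof. destruct HG as [[_ [_ H]] _]. exact H. Qed.

Lemma good_bg : good bg.
Proof.
  eapply good_ext; [|apply (good_deriv' a good_a)]. intro n. unfold deriv, bg.
  rewrite Nat.add_1_r. reflexivity.
Qed.

Lemma good_b2 : good b2.
Proof.
  eapply good_ext; [|apply (good_deriv' _ (good_deriv' a good_a))]. intro n. unfold deriv, b2.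
  replace (n + 2)%nat with (S (S n)) by lia. replace (S (S n) * (n + 1))%nat with (S n * S (S n))%nat by lia.
  rewrite mult_INR. ceq.
Qed.

Lemma good_Nn : good Nn.
Proof. apply good_plus. apply good_bg. apply good_mul, good_shiftR, good_b2. Qed.
Lemma good_D1 : good D1.
Proof. apply good_sub. apply good_Nn. apply good_bg. Qed.
Lemma good_D2 : good D2.
Proof. apply good_sub. apply good_D1. apply good_mul, good_shiftR, good_bg. Qed.
Lemma good_D3 : good D3.
Proof. apply good_sub. apply good_D2. apply good_mul, good_shiftR, good_shiftR, good_bg. Qed.
Lemma good_E1 : good E1.
Proof. apply good_shift, good_D1. Qed.
Lemma good_E2 : good E2.
Proof. apply (good_shift (fun n => D2 (S n))), good_shift, good_D2. Qed.
Lemma good_E3 : good E3.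
Proof. apply (good_shift (fun n => D3 (S (S n)))), (good_shift (fun n => D3 (S n))), good_shift, good_D3. Qed.

Lemma PS_Nn z : Cabs z < 1 -> PS Nn z = Cadd (PS bg z) (Cmul (-2,0) (Cmul z (PS b2 z))).
Proof.
  intro Hz. unfold Nn. rewrite PS_plus; auto using good_bg. rewrite PS_mul, PS_shiftR; auto using good_b2, good_shiftR.
  apply good_mul, good_shiftR, good_b2.
Qed.

Lemma R1 z : Cabs z < 1 -> PS Nn z = Cadd (PS bg z) (Cmul z (PS E1 z)).
Proof.
  intro Hz. assert (H : PS D1 z = Csub (PS Nn z) (PS bg z)) by (unfold D1; apply PS_sub; auto using good_Nn, good_bg).
  rewrite PS_shift in H by (auto using good_D1).
  replace (D1 O) with C0 in H by (unfold D1, Nn; simpl; ceq).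
  unfold E1.
  revert H. generalize (PS Nn z) (PS bg z) (PS (fun n => D1 (S n)) z). intros x y w H.
  transitivity (Cadd y (Csub x y)); [ceq|]. rewrite <- H. ceq.
Qed.
Lemma PS_shift2 (b : nat -> Cx) z : good b -> Cabs z < 1 -> PS b z = Cadd (b O) (Cmul z (Cadd (b 1%nat) (Cmul z (PS (fun n => b (S (S n))) z)))).
Proof.
  intros Hb Hz. rewrite PS_shift by auto. rewrite (PS_shift (fun n => b (S n))) by (auto using good_shift). reflexivity.
Qed.

Lemma PS_shift3 (b : nat -> Cx) z : good b -> Cabs z < 1 -> PS b z =
  Cadd (b O) (Cmul z (Cadd (b 1%nat) (Cmul z (Cadd (b 2%nat) (Cmul z (PS (fun n => b (S (S (S n)))) z)))))).
Proof.
  intros Hb Hz. rewrite PS_shift2 by auto. rewrite (PS_shift (fun n => b (S (S n)))).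
  reflexivity. apply (good_shift (fun n => b (S n))), good_shift; auto. auto.
Qed.

Lemma D2_0 : D2 O = C0.
Proof. unfold D2, D1, Nn. simpl. ceq. Qed.
Lemma D2_1 : D2 1%nat = C0.
Proof. unfold D2, D1, Nn, bg, b2, c1. simpl. rewrite a1. ceq. Qed.
Lemma D3_0 : D3 O = C0.
Proof. unfold D3. rewrite D2_0. simpl. ceq. Qed.
Lemma D3_1 : D3 1%nat = C0.
Proof. unfold D3. rewrite D2_1. simpl. ceq. Qed.
Lemma D3_2 : D3 2%nat = C0.
Proof. unfold D3, D2, D1, Nn, bg, b2, c1, c2. simpl. rewrite a1. ceq. Qed.
Lemma PS_D1 z : Cabs z < 1 -> PS D1 z = Csub (PS Nn z) (PS bg z).
Proof. intro Hz. unfold D1. apply PS_sub; auto using good_Nn, good_bg. Qed.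

Lemma PS_D2 z : Cabs z < 1 -> PS D2 z = Csub (PS D1 z) (Cmul c1 (Cmul z (PS bg z))).
Proof.
  intro Hz. unfold D2 at 1. rewrite PS_sub; auto using good_D1.
  rewrite PS_mul, PS_shiftR; auto using good_bg, good_shiftR.
  apply good_mul, good_shiftR, good_bg.
Qed.

Lemma PS_D3 z : Cabs z < 1 -> PS D3 z = Csub (PS D2 z) (Cmul c2 (Cmul z (Cmul z (PS bg z)))).
Proof.
  intro Hz. unfold D3 at 1. rewrite PS_sub; auto using good_D2.
  rewrite PS_mul, !PS_shiftR; auto using good_bg, good_shiftR.
  apply good_mul, good_shiftR, good_shiftR, good_bg.
Qed.

Lemma R2 z : Cabs z < 1 -> PS Nn z = Cadd (Cmul (PS bg z) (Cadd C1 (Cmul c1 z))) (Cmul (Cmul z z) (PS E2 z)).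
Proof.
  intro Hz. pose proof (PS_D1 z Hz) as H1. pose proof (PS_D2 z Hz) as H2.
  rewrite (PS_shift2 D2) in H2 by (auto using good_D2). rewrite D2_0, D2_1 in H2.
  unfold E2. revert H1 H2. generalize (PS Nn z) (PS bg z) (PS D1 z) (PS (fun n => D2 (S (S n))) z) c1.
  intros N G D E c H1 H2.
  transitivity (Cadd G D); [rewrite H1; ceq|].
  transitivity (Cadd G (Cadd (Csub D (Cmul c (Cmul z G))) (Cmul c (Cmul z G)))); [ceq|].
  rewrite <- H2. ceq.
Qed.

Lemma R3 z : Cabs z < 1 -> PS Nn z = Cadd (Cmul (PS bg z) (Cadd C1 (Cadd (Cmul c1 z) (Cmul c2 (Cmul z z))))) (Cmul (Cmul z (Cmul z z)) (PS E3 z)).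
Proof.
  intro Hz. pose proof (PS_D1 z Hz) as H1. pose proof (PS_D2 z Hz) as H2. pose proof (PS_D3 z Hz) as H3.
  rewrite (PS_shift3 D3) in H3 by (auto using good_D3). rewrite D3_0, D3_1, D3_2 in H3.
  unfold E3. revert H1 H2 H3. generalize (PS Nn z) (PS bg z) (PS D1 z) (PS D2 z) (PS (fun n => D3 (S (S (S n)))) z) c1 c2.
  intros N G D D' E c c' H1 H2 H3.
  transitivity (Cadd G D); [rewrite H1; ceq|].
  transitivity (Cadd G (Cadd (Csub D (Cmul c (Cmul z G))) (Cmul c (Cmul z G)))); [ceq|].
  rewrite <- H2.
  transitivity (Cadd G (Cadd (Cadd (Csub D' (Cmul c' (Cmul z (Cmul z G)))) (Cmul c' (Cmul z (Cmul z G)))) (Cmul c (Cmul z G)))); [ceq|].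
  rewrite <- H3. ceq.
Qed.
Lemma G_pos z : Cabs z < 1 -> PS bg z <> C0 /\ 0 < Re (Cmul (PS Nn z) (Cinv (PS bg z))).
Proof.
  intro Hz. assert (Hz' : in_D z) by (apply Cabs_lt1; auto).
  destruct HG as [_ HC].
  destruct (HC z (PS bg z) (PS b2 z) Hz' (PS_Csum bg z good_bg Hz') (PS_Csum b2 z good_b2 Hz')) as [Hnz Hre].
  split; auto. rewrite PS_Nn by auto.
  pose proof (Cnorm2_pos _ Hnz) as Hn.
  revert Hre Hn. generalize (PS bg z) (PS b2 z). intros g d Hre Hn.
  assert (E : Re (Cmul (Cadd g (Cmul (-2, 0) (Cmul z d))) (Cinv g)) = 1 - 2 * Re (Cdiv (Cmul z d) g)).
  { cdestr. cunfold. field. lra. }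
  rewrite E. replace (Re (Cadd C1 (Cdiv (Cmul z d) g))) with (1 + Re (Cdiv (Cmul z d) g)) in Hre by reflexivity. lra.
Qed.

Lemma NZ_bg : NZ bg.
Proof. intros z Hz. apply G_pos; auto. Qed.
End ClassG.

Definition Qp (q0 q1 q2 z : Cx) := Cadd q0 (Cadd (Cmul q1 z) (Cmul q2 (Cmul z z))).

Lemma alg_P1 G Gi N z E : Cmul G Gi = C1 -> N = Cadd G (Cmul z E) ->
  Re (Cmul N Gi) = 1 + Re (Cmul (Cmul z E) Gi).
Proof.
  intros HG HN. rewrite HN.
  replace (Cmul (Cadd G (Cmul z E)) Gi) with (Cadd (Cmul G Gi) (Cmul (Cmul z E) Gi)) by ceq.
  rewrite HG. unfold Cadd, C1, Re; simpl. ring.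
Qed.

Lemma alg_P2 G Gi N z E c : Cmul G Gi = C1 -> N = Cadd (Cmul G (Cadd C1 (Cmul c z))) (Cmul (Cmul z z) E) ->
  Cmul (Cconj z) (Cmul N Gi) = Cadd (Cconj z) (Cadd (Cscal (Cnorm2 z) c) (Cscal (Cnorm2 z) (Cmul (Cmul z E) Gi))).
Proof.
  intros HG HN. rewrite HN.
  transitivity (Cadd (Cmul (Cmul (Cconj z) (Cadd C1 (Cmul c z))) (Cmul G Gi)) (Cmul (Cmul (Cconj z) (Cmul (Cmul z z) E)) Gi)); [ceq|].
  rewrite HG. ceq.
Qed.

Lemma alg_P3 G Gi N z E c c' : Cmul G Gi = C1 ->
  N = Cadd (Cmul G (Cadd C1 (Cadd (Cmul c z) (Cmul c' (Cmul z z))))) (Cmul (Cmul z (Cmul z z)) E) ->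
  Cmul (Cmul (Cconj z) (Cconj z)) (Cmul N Gi) =
  Cadd (Cmul (Cconj z) (Cconj z)) (Cadd (Cscal (Cnorm2 z) (Cmul c (Cconj z)))
    (Cadd (Cscal (Cnorm2 z * Cnorm2 z) c') (Cscal (Cnorm2 z * Cnorm2 z) (Cmul (Cmul z E) Gi)))).
Proof.
  intros HG HN. rewrite HN.
  transitivity (Cadd (Cmul (Cmul (Cmul (Cconj z) (Cconj z)) (Cadd C1 (Cadd (Cmul c z) (Cmul c' (Cmul z z))))) (Cmul G Gi))
     (Cmul (Cmul (Cmul (Cconj z) (Cconj z)) (Cmul (Cmul z (Cmul z z)) E)) Gi)); [ceq|].
  rewrite HG. ceq.
Qed.

Lemma Re_Cadd x y : Re (Cadd x y) = Re x + Re y.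
Proof. reflexivity. Qed.
Lemma Re_mul_add a x y : Re (Cmul a (Cadd x y)) = Re (Cmul a x) + Re (Cmul a y).
Proof. cdestr; cunfold; ring. Qed.
Lemma Re_mul_scal a r x : Re (Cmul a (Cscal r x)) = r * Re (Cmul a x).
Proof. cdestr; cunfold; ring. Qed.
Lemma Re_scal_mul a r x : Re (Cmul (Cscal r a) x) = r * Re (Cmul a x).
Proof. cdestr; cunfold; ring. Qed.
Lemma Re_RtoC_mul r x : Re (Cmul (RtoC r) x) = r * Re x.
Proof. cdestr; cunfold; ring. Qed.
Lemma Re_conj_conj a x : Re (Cmul (Cconj a) (Cconj x)) = Re (Cmul a x).
Proof. cdestr; cunfold; ring. Qed.
Lemma Re_conj_conj2 a x : Re (Cmul (Cconj a) (Cmul (Cconj x) (Cconj x))) = Re (Cmul a (Cmul x x)).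
Proof. cdestr; cunfold; ring. Qed.
Lemma Re_conj3 a c x : Re (Cmul (Cconj a) (Cmul c (Cconj x))) = Re (Cmul (Cmul a (Cconj c)) x).
Proof. cdestr; cunfold; ring. Qed.
Lemma Re_mul_Re a x : Re x * Re a = (Re (Cmul a x) + Re (Cmul (Cconj a) x)) / 2.
Proof. cdestr; cunfold; field. Qed.

Lemma LQ q0 q1 q2 z : Cnorm2 (Qp q0 q1 q2 z) =
  (Cnorm2 q0 + Cnorm2 z * Cnorm2 q1 + Cnorm2 z * Cnorm2 z * Cnorm2 q2)
  + Re (Cmul (Cscal 2 (Cadd (Cmul (Cconj q0) q1) (Cscal (Cnorm2 z) (Cmul (Cconj q1) q2)))) z)
  + Re (Cmul (Cscal 2 (Cmul (Cconj q0) q2)) (Cmul z z)).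
Proof. unfold Qp. cdestr. cunfold. ring. Qed.

Lemma split1 b z p : Re p * Re (Cmul b z) = (Re (Cmul b (Cmul z p)) + Re (Cmul (Cconj b) (Cmul (Cconj z) p))) / 2.
Proof. cdestr; cunfold; field. Qed.
Lemma split2 d z p : Re p * Re (Cmul d (Cmul z z)) =
  (Re (Cmul d (Cmul (Cmul z z) p)) + Re (Cmul (Cconj d) (Cmul (Cmul (Cconj z) (Cconj z)) p))) / 2.
Proof. cdestr; cunfold; field. Qed.

Section Pointwise.
Variables (z G Gi N E1 E2 E3 c c' q0 q1 q2 : Cx).
Hypotheses (HG : Cmul G Gi = C1)
  (H1 : N = Cadd G (Cmul z E1))
  (H2 : N = Cadd (Cmul G (Cadd C1 (Cmul c z))) (Cmul (Cmul z z) E2))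
  (H3 : N = Cadd (Cmul G (Cadd C1 (Cadd (Cmul c z) (Cmul c' (Cmul z z))))) (Cmul (Cmul z (Cmul z z)) E3)).

Let n := Cnorm2 z.
Let al := Cnorm2 q0 + n * Cnorm2 q1 + n * n * Cnorm2 q2.
Let be := Cscal 2 (Cadd (Cmul (Cconj q0) q1) (Cscal n (Cmul (Cconj q1) q2))).
Let de := Cscal 2 (Cmul (Cconj q0) q2).

Lemma pointwise :
  Re (Cmul N Gi) * Cnorm2 (Qp q0 q1 q2 z) =
  (al + n / 2 * Re (Cmul (Cconj be) c) + n * n / 2 * Re (Cmul (Cconj de) c'))
  + Re (Cmul (RtoC al) (Cmul (Cmul z E1) Gi))
  + Re (Cmul (Cscal (1/2) be) (Cmul z (Cmul N Gi)))
  + Re (Cmul (Cscal (1/2) be) z)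
  + Re (Cmul (Cscal (n/2) (Cconj be)) (Cmul (Cmul z E2) Gi))
  + Re (Cmul (Cscal (1/2) de) (Cmul (Cmul z z) (Cmul N Gi)))
  + Re (Cmul (Cscal (1/2) de) (Cmul z z))
  + Re (Cmul (Cscal (n/2) (Cmul de (Cconj c))) z)
  + Re (Cmul (Cscal (n*n/2) (Cconj de)) (Cmul (Cmul z E3) Gi)).
Proof.
  pose proof (alg_P1 _ _ _ _ _ HG H1) as P1.
  pose proof (alg_P2 _ _ _ _ _ _ HG H2) as P2.
  pose proof (alg_P3 _ _ _ _ _ _ _ HG H3) as P3.
  rewrite LQ. unfold al, be, de, n.
  rewrite !Rmult_plus_distr_l.
  rewrite split1, split2.
  rewrite P2, P3.
  rewrite !Re_mul_add, !Re_mul_scal, Re_conj_conj, Re_conj_conj2, Re_conj3.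
  rewrite P1.
  rewrite !Re_RtoC_mul, !Re_scal_mul.
  match goal with |- @eq ?T _ _ => idtac "TYPE" T end. field. 
Qed.
End Pointwise.

Lemma Cnorm2_gam r t : Cnorm2 (gam r t) = r * r.
Proof.
  unfold gam, Cnorm2, Re, Im; simpl.
  replace (r * cos t * (r * cos t) + r * sin t * (r * sin t)) with (r * r * (Rsqr (sin t) + Rsqr (cos t))) by (unfold Rsqr; ring).
  rewrite sin2_cos2. ring.
Qed.

Lemma Fn1 e b z : Fn e b 1 z = Cmul (Cmul z (PS e z)) (Cinv (PS b z)).
Proof. unfold Fn. simpl Cpow. ceq3. Qed.

Lemma isR_plus (f g : R -> R) a b l1 l2 : is_RInt f a b l1 -> is_RInt g a b l2 -> is_RInt (fun t => f t + g t) a b (l1 + l2).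
Proof. intros H1 H2. exact (@is_RInt_plus R_NormedModule f g a b l1 l2 H1 H2). Qed.

Lemma int_const K : is_RInt (fun _ => K) 0 (2*PI) (2*PI*K).
Proof.
  pose proof (@is_RInt_const R_NormedModule 0 (2*PI) K) as H.
  replace (2*PI*K) with (scal (2*PI - 0) K). exact H. unfold scal; simpl; unfold mult; simpl. ring.
Qed.

Lemma Cmul_inv_r g : g <> C0 -> Cmul g (Cinv g) = C1.
Proof. intro H. pose proof (Cnorm2_pos _ H). cdestr. cunfold. f_equal; field; lra. Qed.

Lemma Fn2 e b z : Fn e b 2 z = Cmul (Cmul z z) (Cmul (PS e z) (Cinv (PS b z))).
Proof. unfold Fn. simpl Cpow. ceq3. Qed.

Lemma Cmul_C1_r z : Cmul z C1 = z.
Proof. ceq. Qed.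

Lemma assoc1 z x y : Cmul (Cmul z x) y = Cmul z (Cmul x y).
Proof. ceq. Qed.

Section Integral.
Variable a : nat -> Cx.
Hypothesis HG : class_G 1 a.
Variables (rho : R) (q0 q1 q2 : Cx).
Hypothesis Hr : 0 < rho < 1.

Let n := rho * rho.
Let al := Cnorm2 q0 + n * Cnorm2 q1 + n * n * Cnorm2 q2.
Let be := Cscal 2 (Cadd (Cmul (Cconj q0) q1) (Cscal n (Cmul (Cconj q1) q2))).
Let de := Cscal 2 (Cmul (Cconj q0) q2).
Let Kc := al + n / 2 * Re (Cmul (Cconj be) (c1 a)) + n * n / 2 * Re (Cmul (Cconj de) (c2 a)).

Lemma integrand_eq t :
  Re (Cmul (PS (Nn a) (gam rho t)) (Cinv (PS (bg a) (gam rho t)))) * Cnorm2 (Qp q0 q1 q2 (gam rho t)) =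
  Kc + (Re (Cmul (RtoC al) (Fn (E1 a) (bg a) 1 (gam rho t)))
  + (Re (Cmul (Cscal (1/2) be) (Fn (Nn a) (bg a) 1 (gam rho t)))
  + (Re (Cmul (Cscal (1/2) be) (Fn delta0 delta0 1 (gam rho t)))
  + (Re (Cmul (Cscal (n/2) (Cconj be)) (Fn (E2 a) (bg a) 1 (gam rho t)))
  + (Re (Cmul (Cscal (1/2) de) (Fn (Nn a) (bg a) 2 (gam rho t)))
  + (Re (Cmul (Cscal (1/2) de) (Fn delta0 delta0 2 (gam rho t)))
  + (Re (Cmul (Cscal (n/2) (Cmul de (Cconj (c1 a)))) (Fn delta0 delta0 1 (gam rho t)))
  + Re (Cmul (Cscal (n*n/2) (Cconj de)) (Fn (E3 a) (bg a) 1 (gam rho t)))))))))).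
Proof.
  set (z := gam rho t).
  assert (Hz : Cabs z < 1) by (unfold z; rewrite Cabs_gam, Rabs_right; lra).
  assert (Hn : Cnorm2 z = n) by (unfold z, n; apply Cnorm2_gam).
  clearbody z.
  destruct (G_pos a HG z Hz) as [Hnz _].
  assert (HGi : Cmul (PS (bg a) z) (Cinv (PS (bg a) z)) = C1).
  { apply Cmul_inv_r; auto. }
  pose proof (pointwise z (PS (bg a) z) (Cinv (PS (bg a) z)) (PS (Nn a) z) (PS (E1 a) z) (PS (E2 a) z) (PS (E3 a) z)
     (c1 a) (c2 a) q0 q1 q2 HGi (R1 a HG z Hz) (R2 a HG z Hz) (R3 a HG z Hz)) as P.
  rewrite Hn in P. rewrite P.
  rewrite !Fn_delta0 by auto. rewrite !Fn1, Fn2. simpl Cpow.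
  rewrite !Cmul_C1_r.
  rewrite !assoc1.
  unfold Kc, al, be, de. ring.
Qed.
Lemma Kc_nonneg : 0 <= Kc.
Proof.
  assert (Hr' : 0 <= rho < 1) by lra.
  pose proof (good_bg a HG) as Gb. pose proof (NZ_bg a HG) as Nb.
  pose proof (cauchy_C (Cscal (n*n/2) (Cconj de)) _ _ 1 rho (good_E3 a HG) Gb Nb (le_n _) Hr') as I8.
  pose proof (isR_plus _ _ _ _ _ _ (cauchy_C (Cscal (n/2) (Cmul de (Cconj (c1 a)))) _ _ 1 rho good_delta0 good_delta0 NZ_delta0 (le_n _) Hr') I8) as I7.
  pose proof (isR_plus _ _ _ _ _ _ (cauchy_C (Cscal (1/2) de) _ _ 2 rho good_delta0 good_delta0 NZ_delta0 (le_S _ _ (le_n _)) Hr') I7) as I6.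
  pose proof (isR_plus _ _ _ _ _ _ (cauchy_C (Cscal (1/2) de) _ _ 2 rho (good_Nn a HG) Gb Nb (le_S _ _ (le_n _)) Hr') I6) as I5.
  pose proof (isR_plus _ _ _ _ _ _ (cauchy_C (Cscal (n/2) (Cconj be)) _ _ 1 rho (good_E2 a HG) Gb Nb (le_n _) Hr') I5) as I4.
  pose proof (isR_plus _ _ _ _ _ _ (cauchy_C (Cscal (1/2) be) _ _ 1 rho good_delta0 good_delta0 NZ_delta0 (le_n _) Hr') I4) as I3.
  pose proof (isR_plus _ _ _ _ _ _ (cauchy_C (Cscal (1/2) be) _ _ 1 rho (good_Nn a HG) Gb Nb (le_n _) Hr') I3) as I2.
  pose proof (isR_plus _ _ _ _ _ _ (cauchy_C (RtoC al) _ _ 1 rho (good_E1 a HG) Gb Nb (le_n _) Hr') I2) as I1.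
  pose proof (isR_plus _ _ _ _ _ _ (int_const Kc) I1) as H.
  replace (2 * PI * Kc + (0 + (0 + (0 + (0 + (0 + (0 + (0 + 0)))))))) with (2 * PI * Kc) in H by ring.
  assert (H' : is_RInt (fun t => Re (Cmul (PS (Nn a) (gam rho t)) (Cinv (PS (bg a) (gam rho t)))) * Cnorm2 (Qp q0 q1 q2 (gam rho t))) 0 (2*PI) (2*PI*Kc)).
  { eapply (@is_RInt_ext R_NormedModule); [|exact H]. intros t _. symmetry. apply integrand_eq. }
  apply is_RInt_ge_0 in H'.
  - pose proof PI_RGT_0. nra.
  - pose proof PI_RGT_0. lra.
  - intros t _. apply Rmult_le_pos; [|apply Cnorm2_ge0].
    left. apply (G_pos a HG). rewrite Cabs_gam, Rabs_right; lra.
Qed.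
End Integral.

Definition PhiA (x0 x1 x2 : Cx) := Cnorm2 x0 + Cnorm2 x1 + Cnorm2 x2.
Definition PhiB (x0 x1 x2 c : Cx) := Re (Cmul (Cconj (Cadd (Cmul (Cconj x0) x1) (Cmul (Cconj x1) x2))) c).
Definition PhiC (x0 x2 c' : Cx) := Re (Cmul (Cconj (Cmul (Cconj x0) x2)) c').

Lemma Kc_scaled rho x0 x1 x2 c c' : 0 < rho ->
  let n := rho * rho in
  let q0 := x0 in let q1 := Cscal (/ rho) x1 in let q2 := Cscal (/ (rho * rho)) x2 in
  let al := Cnorm2 q0 + n * Cnorm2 q1 + n * n * Cnorm2 q2 in
  let be := Cscal 2 (Cadd (Cmul (Cconj q0) q1) (Cscal n (Cmul (Cconj q1) q2))) in
  let de := Cscal 2 (Cmul (Cconj q0) q2) in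
  al + n / 2 * Re (Cmul (Cconj be) c) + n * n / 2 * Re (Cmul (Cconj de) c') =
  PhiA x0 x1 x2 + rho * PhiB x0 x1 x2 c + rho * rho * PhiC x0 x2 c'.
Proof.
  intros Hr. simpl. unfold PhiA, PhiB, PhiC. cdestr. cunfold. field. lra.
Qed.

Lemma limit_quad A B C : (forall rho, 0 < rho < 1 -> 0 <= A + rho * B + rho * rho * C) -> 0 <= A + B + C.
Proof.
  intro H. destruct (Rle_lt_dec 0 (A + B + C)) as [|Hneg]; auto. exfalso.
  set (eps := - (A + B + C)). assert (He : 0 < eps) by (unfold eps; lra).
  set (L := Rabs B + 2 * Rabs C + 1). assert (HL : 1 <= L) by (unfold L; pose proof (Rabs_pos B); pose proof (Rabs_pos C); lra).
  set (d := Rmin (1/2) (eps / (2 * L))).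
  assert (Hd0 : 0 < d) by (apply Rmin_pos; [lra| apply Rdiv_lt_0_compat; lra]).
  assert (Hd1 : d <= 1/2) by apply Rmin_l.
  assert (Hd2 : d <= eps / (2 * L)) by apply Rmin_r.
  assert (Hd3 : d * L <= eps / 2).
  { apply Rmult_le_compat_r with (r := L) in Hd2; [|lra]. replace (eps / (2 * L) * L) with (eps / 2) in Hd2 by (field; lra). lra. }
  specialize (H (1 - d) ltac:(lra)).
  assert (E : A + (1 - d) * B + (1 - d) * (1 - d) * C = (A + B + C) - d * (B + C * (2 - d))) by ring.
  rewrite E in H.
  assert (Hb : Rabs (B + C * (2 - d)) <= L).
  { eapply Rle_trans. apply Rabs_triang. rewrite Rabs_mult. rewrite (Rabs_right (2 - d)) by lra.
    unfold L. pose proof (Rabs_pos C). nra. }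
  assert (d * (B + C * (2 - d)) <= d * L).
  { apply Rmult_le_compat_l; [lra|]. eapply Rle_trans. apply Rle_abs. exact Hb. }
  assert (- (B + C * (2 - d)) <= L).
  { eapply Rle_trans. 2: exact Hb. rewrite <- Rabs_Ropp. apply Rle_abs. }
  assert (- (d * (B + C * (2 - d))) <= d * L) by nra.
  unfold eps in *. lra.
Qed.

Lemma Phi_nonneg a : class_G 1 a -> forall x0 x1 x2,
  0 <= PhiA x0 x1 x2 + PhiB x0 x1 x2 (c1 a) + PhiC x0 x2 (c2 a).
Proof.
  intros HG x0 x1 x2. apply limit_quad. intros rho Hr.
  pose proof (Kc_nonneg a HG rho x0 (Cscal (/ rho) x1) (Cscal (/ (rho * rho)) x2) Hr) as H.
  rewrite (Kc_scaled rho x0 x1 x2 (c1 a) (c2 a)) in H by lra. exact H.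
Qed.

Lemma Phi_inst1 u v :
  PhiA C1 (Cscal 2 u) C0 + PhiB C1 (Cscal 2 u) C0 (Cscal (-4) u)
  + PhiC C1 C0 (Csub (Cscal 8 (Cmul u u)) (Cscal 12 v)) = 1 - 4 * Cnorm2 u.
Proof. unfold PhiA, PhiB, PhiC. cdestr. cunfold. ring. Qed.

Lemma Phi_inst2 u v s :
  let x0 := Cscal s (Cconj (Cscal 6 v)) in
  let x1 := Cadd (Cmul (Cscal 2 u) x0) (Cconj (Cscal 2 u)) in
  PhiA x0 x1 C1 + PhiB x0 x1 C1 (Cscal (-4) u) + PhiC x0 C1 (Csub (Cscal 8 (Cmul u u)) (Cscal 12 v))
  = (1 - 4 * Cnorm2 u) * (s * s * (36 * Cnorm2 v) + 1) - 2 * s * (36 * Cnorm2 v).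
Proof. simpl. unfold PhiA, PhiB, PhiC. cdestr. cunfold. ring. Qed.

Lemma Phi2 a : class_G 1 a -> forall s,
  0 <= (1 - 4 * Cnorm2 (a 2%nat)) * (s * s * (36 * Cnorm2 (a 3%nat)) + 1) - 2 * s * (36 * Cnorm2 (a 3%nat)).
Proof.
  intros HG s. pose proof (Phi_nonneg a HG) as HP.
  pose proof (Phi_inst2 (a 2%nat) (a 3%nat) s) as E. simpl in E. rewrite <- E. apply HP.
Qed.

Lemma main_bound a : class_G 1 a -> 1 / 2 <= detT31 a <= 1.
Proof.
  intro HG.
  pose proof (Phi_nonneg a HG) as HP.
  assert (Ec1 : c1 a = Cscal (-4) (a 2%nat)) by reflexivity.
  assert (Ec2 : c2 a = Csub (Cscal 8 (Cmul (a 2%nat) (a 2%nat))) (Cscal 12 (a 3%nat))) by reflexivity.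
  rewrite Ec1, Ec2 in HP.
  set (u := a 2%nat) in *. set (v := a 3%nat) in *.
  pose proof (HP C1 (Cscal 2 u) C0) as H1. rewrite Phi_inst1 in H1.
  set (U := Cnorm2 u) in *. set (V := Cnorm2 v) in *.
  assert (HU : 0 <= U) by apply Cnorm2_ge0. assert (HV : 0 <= V) by apply Cnorm2_ge0.
  assert (HT : 36 * V <= (1 - 4 * U) * (1 - 4 * U)).
  { destruct (Req_dec (4 * U) 1) as [E|E].
    - pose proof (Phi2 a HG 1) as H2. fold u v U V in H2. rewrite E in H2. nra.
    - assert (Hs : 0 < 1 - 4 * U) by lra.
      pose proof (Phi2 a HG (/ (1 - 4 * U))) as H2. fold u v U V in H2.
      set (w := 1 - 4 * U) in *.
      assert (E2 : w * (/ w * / w * (36 * V) + 1) - 2 * / w * (36 * V) = (w * w - 36 * V) / w) by (field; lra).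
      rewrite E2 in H2.
      assert (0 <= w * w - 36 * V).
      { apply Rmult_le_reg_r with (/ w). apply Rinv_0_lt_compat; lra. rewrite Rmult_0_l. exact H2. }
      lra. }
  set (y := Cabs v).
  assert (Hy : 0 <= y) by apply Cabs_ge0.
  assert (Hy2 : y * y = V) by apply Cabs_sq.
  set (X := Re (Cmul (Cmul u u) (Cconj v))).
  assert (HX : Rabs X <= U * y).
  { unfold X. eapply Rle_trans. apply Re_le_Cabs. rewrite !Cabs_mul.
    assert (Cabs (Cconj v) = y) by (unfold y, Cabs; f_equal; unfold Cnorm2, Cconj, Re, Im; simpl; ring).
    rewrite H. rewrite Cabs_sq. fold U. lra. }
  assert (HX1 : - (U * y) <= X) by (pose proof (Rle_abs (-X)); rewrite Rabs_Ropp in H; lra).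
  assert (HX2 : X <= U * y) by (pose proof (Rle_abs X); lra).
  assert (H6 : 6 * y <= 1 - 4 * U).
  { destruct (Rle_lt_dec (6 * y) (1 - 4 * U)); auto. nra. }
  assert (Edet : detT31 a = 2 * X - 2 * U - V + 1) by reflexivity.
  rewrite Edet. split.
  - assert (U * y <= U * ((1 - 4 * U) / 6)) by (apply Rmult_le_compat_l; lra).
    assert (V <= (1 - 4*U) * (1 - 4*U) / 36) by lra.
    nra.
  - assert (U * y <= U) by nra. nra.
Qed.

Lemma PS_zero_ext b z : (forall n, b n = C0) -> PS b z = C0.
Proof. intro H. rewrite (PS_ext b (fun _ => C0)) by auto. apply PS_zero. Qed.

Definition aex (t : Cx) (n : nat) : Cx := match n with 1%nat => C1 | 2%nat => t | _ => C0 end.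

Lemma good_aex t : good (aex t).
Proof. apply good_fin with 2%nat. intros n Hn. destruct n as [|[|[|n]]]; try lia. reflexivity. Qed.

Lemma aex_big t n : (3 <= n)%nat -> aex t n = C0.
Proof. intro H. destruct n as [|[|[|n]]]; try lia. reflexivity. Qed.

Definition b1ex t n := Cscal (INR (n + 1)) (aex t (n + 1)%nat).
Definition b2ex t n := Cscal (INR ((n + 2) * (n + 1))) (aex t (n + 2)%nat).

Lemma good_b1ex t : good (b1ex t).
Proof. apply good_fin with 1%nat. intros n Hn. unfold b1ex. rewrite aex_big by lia. ceq. Qed.
Lemma good_b2ex t : good (b2ex t).
Proof. apply good_fin with 0%nat. intros n Hn. unfold b2ex. rewrite aex_big by lia. ceq. Qed.

Lemma PS_b1ex t z : Cabs z < 1 -> PS (b1ex t) z = Cadd C1 (Cmul z (Cscal 2 t)).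
Proof.
  intro Hz. rewrite PS_shift2 by (auto using good_b1ex).
  rewrite PS_zero_ext. unfold b1ex. simpl. ceq.
  intro n. unfold b1ex. rewrite aex_big by lia. ceq.
Qed.

Lemma PS_b2ex t z : Cabs z < 1 -> PS (b2ex t) z = Cscal 2 t.
Proof.
  intro Hz. rewrite PS_shift by (auto using good_b2ex).
  rewrite PS_zero_ext. unfold b2ex. simpl. ceq.
  intro n. unfold b2ex. rewrite aex_big by lia. ceq.
Qed.

Lemma class_G_aex t : (t = C0 \/ t = (-1/2, 0)) -> class_G 1 (aex t).
Proof.
  intros Ht. split. split.
  - intros z Hz. exists (PS (aex t) z). apply PS_Csum; auto using good_aex.
  - split; reflexivity.
  - intros z d1 d2 Hz H1 H2.
    assert (Hz1 : Cabs z < 1) by (apply Cabs_lt1; auto).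
    pose proof (PS_Csum (b1ex t) z (good_b1ex t) Hz) as P1.
    pose proof (PS_Csum (b2ex t) z (good_b2ex t) Hz) as P2.
    assert (E1 : d1 = PS (b1ex t) z) by (eapply Csum_unique; [exact H1| exact P1]).
    assert (E2 : d2 = PS (b2ex t) z) by (eapply Csum_unique; [exact H2| exact P2]).
    rewrite PS_b1ex in E1 by auto. rewrite PS_b2ex in E2 by auto. subst d1 d2.
    unfold in_D in Hz. clear H1 H2 P1 P2 Hz1.
    destruct Ht as [Ht|Ht]; subst t.
    + split.
      * cdestr. cunfold. intro E. inversion E. lra.
      * cdestr. cunfold. replace (1 + 0 * 0) with 1 by ring. field_simplify; lra.
    + destruct z as [x y]. unfold Cnorm2, Re, Im in Hz; simpl in Hz.
      assert (Hd : 0 < (1 - x) * (1 - x) + y * y) by nra.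
      split.
      * cunfold. intro E. inversion E. nra.
      * cunfold. match goal with |- 1 + / ?D * ?K < _ =>
          replace D with ((1-x)*(1-x)+y*y) by field; replace K with (x*x+y*y-x) by field end.
        assert (/ ((1 - x) * (1 - x) + y * y) * (x * x + y * y - x) < 1/2).
        { apply (Rmult_lt_reg_l ((1 - x) * (1 - x) + y * y)); auto.
          rewrite <- Rmult_assoc, Rinv_r by lra. nra. }
        lra.
Qed.

Lemma det_aex0 : detT31 (aex C0) = 1.
Proof. unfold detT31, aex. cunfold. ring. Qed.

Lemma det_aex1 : detT31 (aex (-1/2, 0)) = 1 / 2.
Proof. unfold detT31, aex. cunfold. field. Qed.

Theorem theorem4 :
  (forall a : nat -> Cx, class_G 1 a -> 1 / 2 <= detT31 a <= 1) /\
  (exists a : nat -> Cx, class_G 1 a /\ detT31 a = 1 / 2) /\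
  (exists a : nat -> Cx, class_G 1 a /\ detT31 a = 1).
Proof.
  split; [|split].
  - apply main_bound.
  - exists (aex (-1/2, 0)). split. apply class_G_aex. right; reflexivity. apply det_aex1.
  - exists (aex C0). split. apply class_G_aex. left; reflexivity. apply det_aex0.
Qed.
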